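(* Let $m>0$ be a scalar, $D\in\mathbb{R}^{3\times3}$ a symmetric positive definite matrix, $W\in\mathbb{R}^{3\times 3}$ a symmetric positive definite weight matrix, and $\Phi:[0,\infty)\to[0,\infty)$ a smooth function with $\Phi(0)=0$ and $\Phi'(x)>0$ for all $x\ge 0$. Let $t\mapsto \Omega^m(t)\in\mathbb{R}^3$, $t\mapsto E(t)\in\mathbb{R}^{3\times3}$ and $t\mapsto U^m(t)\in\mathbb{R}^{3\times3}$ be smooth functions of time (measured angular velocity, matrix of known inertial directions, and matrix of measured body-frame directions, respectively), and set $L(t)=E(t)\,W\,U^m(t)^{\mathsf T}$. Consider the continuous-time filter on $\mathrm{SO}(3)\times\mathbb{R}^3$ with state $(\hat R,\omega)$: $$\dot{\hat R}=\hat R\,\hat\Omega^\times,\qquad \hat\Omega=\Omega^m-\omega,\qquad m\dot\omega=-m\,\hat\Omega\times\omega+\Phi'\big(\mathcal U^0(\hat R,U^m)\big)\,S_L(\hat R)-D\omega,$$ where $\mathcal U^0(\hat R,U^m)=\tfrac12\langle E-\hat R U^m,(E-\hat RU^m)W\rangle$ and $S_L(\hat R)=\mathrm{vex}(L^{\mathsf T}\hat R-\hat R^{\mathsf T}L)$, all quantities evaluated at time $t$. For a time step $h>0$ and $t_i=t_0+ih$, write $\Omega^m_i=\Omega^m(t_i)$, $E_i=E(t_i)$, $U^m_i=U^m(t_i)$, $L_i=E_iWU^{m\,\mathsf T}_i$, and define the discrete-time filter $(\hat R_i,\omega_i)\mapsto(\hat R_{i+1},\omega_{i+1})$ by $$\omega_{i+\frac12}=\Big(mI_{3\times3}+\tfrac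 h2 D\Big)^{-1}\Big\{\exp\big(-\tfrac h2\hat\Omega_i^\times\big)\,m\,\omega_i+\tfrac h2\,\Phi'\big(\mathcal U^0_i(\hat R_i,U^m_i)\big)S_{L_i}(\hat R_i)\Big\},$$ $$\hat R_{i+1}=\hat R_i\exp\big(h(\Omega^m_{i+\frac12}-\omega_{i+\frac12})^\times\big),\qquad \Omega^m_{i+\frac12}=\tfrac12(\Omega^m_i+\Omega^m_{i+1}),$$ $$m\,\omega_{i+1}=\exp\big(-\tfrac h2\hat\Omega_{i+1}^\times\big)\Big\{\big(mI_{3\times3}-\tfrac h2D\big)\omega_{i+\frac12}+\tfrac h2\,\Phi'\big(\mathcal U^0_{i+1}(\hat R_{i+1},U^m_{i+1})\big)S_{L_{i+1}}(\hat R_{i+1})\Big\},$$ with $\hat\Omega_i=\Omega^m_i-\omega_i$ (so the last equation is implicit in $\omega_{i+1}$), where $\mathcal U^0_i(\hat R,U)=\tfrac12\langle E_i-\hat RU,(E_i-\hat RU)W\rangle$. Then, for all sufficiently small $h$, this discrete-time filter is a second-order numerical integrator of the continuous-time filter: the local error of one step (starting from the exact state at $t_i$) is $O(h^3)$ as $h\to0$.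
   Context: For $x\in\mathbb{R}^3$, $x^\times\in\mathfrak{so}(3)$ denotes the skew-symmetric matrix with $x^\times y=x\times y$ for all $y\in\mathbb{R}^3$, and $\mathrm{vex}:\mathfrak{so}(3)\to\mathbb{R}^3$ is its inverse. $\exp$ denotes the matrix exponential (mapping $\mathfrak{so}(3)$ to $\mathrm{SO}(3)$). $\langle A,B\rangle=\mathrm{tr}(A^{\mathsf T}B)$ is the trace inner product on $3\times3$ matrices. In the attitude-estimation setting, $E=[e_1\ e_2\ e_1\times e_2]$ collects two known inertial direction vectors and their cross product, and $U^m=[u^m_1\ u^m_2\ u^m_1\times u^m_2]$ collects the corresponding measured body-frame vectors; $\hat R$ is the estimated rotation matrix from body to inertial frame and $\omega$ is the angular velocity estimation error, with $\hat\Omega=\Omega^m-\omega$ the estimated angular velocity. $\mathcal U^0$ is a generalized Wahba cost. *)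

(* Defs.v *)
From Stdlib Require Import Reals Lra Arith Factorial ClassicalEpsilon.
Open Scope R_scope.

Inductive I3 : Type := I0 | I1 | I2.

Definition Vec := I3 -> R.
Definition Mat := I3 -> I3 -> R.

Definition I3_eqb (i j : I3) : bool :=
  match i, j with
  | I0, I0 | I1, I1 | I2, I2 => true
  | _, _ => false
  end.

Definition nxt (i : I3) : I3 := match i with I0 => I1 | I1 => I2 | I2 => I0 end.

Definition sum3 (f : I3 -> R) : R := f I0 + f I1 + f I2.

Definition vec3 (a b c : R) : Vec := fun i => match i with I0 => a | I1 => b | I2 => c end.

Definition vadd (u v : Vec) : Vec := fun i => u i + v i.
Definition vsub (u v : Vec) : Vec := fun i => u i - v i.
Definition vscale (c : R) (v : Vec) : Vec := fun i => c * v i.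
Definition vdot (u v : Vec) : R := sum3 (fun i => u i * v i).

Definition cross (u v : Vec) : Vec :=
  vec3 (u I1 * v I2 - u I2 * v I1)
       (u I2 * v I0 - u I0 * v I2)
       (u I0 * v I1 - u I1 * v I0).

Definition mzero : Mat := fun _ _ => 0.
Definition mid : Mat := fun i j => if I3_eqb i j then 1 else 0.
Definition madd (A B : Mat) : Mat := fun i j => A i j + B i j.
Definition msub (A B : Mat) : Mat := fun i j => A i j - B i j.
Definition mscale (c : R) (A : Mat) : Mat := fun i j => c * A i j.
Definition mtr (A : Mat) : Mat := fun i j => A j i.
Definition mmul (A B : Mat) : Mat := fun i j => sum3 (fun k => A i k * B k j).
Definition mvmul (A : Mat) (v : Vec) : Vec := fun i => sum3 (fun k => A i k * v k).
Definition trace (A : Mat) : R := A I0 I0 + A I1 I1 + A I2 I2.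

Definition frob (A B : Mat) : R := trace (mmul (mtr A) B).

(** x^\times : the skew-symmetric matrix with (x^\times) y = x \times y *)
Definition skew (v : Vec) : Mat := fun i j =>
  match i, j with
  | I0, I0 => 0      | I0, I1 => - v I2 | I0, I2 => v I1
  | I1, I0 => v I2   | I1, I1 => 0      | I1, I2 => - v I0
  | I2, I0 => - v I1 | I2, I1 => v I0   | I2, I2 => 0
  end.

Definition vex (M : Mat) : Vec := vec3 (M I2 I1) (M I0 I2) (M I1 I0).

Definition cof (A : Mat) (i j : I3) : R :=
  A (nxt i) (nxt j) * A (nxt (nxt i)) (nxt (nxt j))
  - A (nxt i) (nxt (nxt j)) * A (nxt (nxt i)) (nxt j).
Definition det3 (A : Mat) : R := sum3 (fun j => A I0 j * cof A I0 j).
Definition inv3 (A : Mat) : Mat := fun i j => cof A j i / det3 A.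

Fixpoint mpow (A : Mat) (n : nat) : Mat :=
  match n with O => mid | S k => mmul A (mpow A k) end.

Definition is_mexp (A M : Mat) : Prop :=
  forall i j, Un_cv (fun n => sum_f_R0 (fun k => mpow A k i j / INR (fact k)) n) (M i j).

Definition mexp (A : Mat) : Mat := epsilon (inhabits mzero) (is_mexp A).

Definition is_rotation (A : Mat) : Prop := mmul (mtr A) A = mid /\ det3 A = 1.
Definition symmetric (A : Mat) : Prop := forall i j, A i j = A j i.
Definition pos_def (A : Mat) : Prop :=
  forall v : Vec, (exists i, v i <> 0) -> vdot v (mvmul A v) > 0.

Definition smooth (f : R -> R) : Prop :=
  exists F : nat -> R -> R, F O = f /\ forall n x, derivable_pt_lim (F n) x (F (S n) x).

Definition vnorm (v : Vec) : R := sum3 (fun i => Rabs (v i)).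
Definition mnorm (A : Mat) : R := sum3 (fun i => sum3 (fun j => Rabs (A i j))).

Definition U0 (E W Rh U : Mat) : R :=
  / 2 * frob (msub E (mmul Rh U)) (mmul (msub E (mmul Rh U)) W).
Definition Lmat (E W U : Mat) : Mat := mmul (mmul E W) (mtr U).
Definition SL (L Rh : Mat) : Vec := vex (msub (mmul (mtr L) Rh) (mmul (mtr Rh) L)).

(* Main.v *)
Require Import Defs.
From Stdlib Require Import Reals Lra Lia Arith Factorial ClassicalEpsilon FunctionalExtensionality.
From Coquelicot Require Coquelicot.
Open Scope R_scope.

Definition aS (n : nat) (x : R) := sum_f_R0 (fun i => sin_n i * x ^ i) n.
Definition cS (n : nat) (x : R) := sum_f_R0 (fun i => cos_n i * x ^ i) n.
Definition bc (i : nat) : R := (-1) ^ i / INR (fact (2 * i + 2)).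
Definition bS (n : nat) (x : R) := sum_f_R0 (fun i => bc i * x ^ i) n.

Definition alpha (x : R) : R := proj1_sig (exist_sin x).
Definition gam (x : R) : R := proj1_sig (exist_cos x).
Definition beta (x : R) : R := if Req_EM_T x 0 then / 2 else (1 - gam x) / x.

Lemma Un_cv_ext (u v : nat -> R) l : (forall n, u n = v n) -> Un_cv u l -> Un_cv v l.
Proof. intros H Hu eps He. destruct (Hu eps He) as [N HN]. exists N. intros n Hn.
rewrite <- H. apply HN; auto. Qed.

Lemma Un_cv_const (c : R) : Un_cv (fun _ => c) c.
Proof. intros eps He. exists 0%nat. intros. unfold Rdist. rewrite Rminus_diag, Rabs_R0. lra. Qed.

Lemma alpha_cv x : Un_cv (fun n => aS n x) (alpha x).
Proof. unfold alpha. destruct (exist_sin x) as [a Ha]. simpl. exact Ha. Qed.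

Lemma gam_cv x : Un_cv (fun n => cS n x) (gam x).
Proof. unfold gam. destruct (exist_cos x) as [a Ha]. simpl. exact Ha. Qed.

Lemma x_bS n x : x * bS n x = 1 - cS (S n) x.
Proof.
  induction n as [|n IH].
  - unfold bS, cS, bc, cos_n. simpl. field.
  - unfold bS, cS in *. simpl sum_f_R0 at 1 2. rewrite Rmult_plus_distr_l, IH.
    simpl sum_f_R0. unfold bc, cos_n.
    replace (2 * S (S n))%nat with (2 * S n + 2)%nat by lia.
    simpl pow. field. split; apply INR_fact_neq_0.
Qed.

Lemma beta_cv x : Un_cv (fun n => bS n x) (beta x).
Proof.
  unfold beta. destruct (Req_EM_T x 0) as [H0|H0].
  - subst. apply Un_cv_ext with (fun _ => / 2); [|apply Un_cv_const].
    induction n as [|n IH].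
    + unfold bS, bc. simpl. field.
    + unfold bS in *. simpl sum_f_R0. rewrite <- IH. simpl. ring.
  - apply Un_cv_ext with (fun n => (1 - cS (n + 1) x) * / x).
    + intros n. replace (n+1)%nat with (S n) by lia. rewrite <- x_bS. field. auto.
    + unfold Rdiv. apply CV_mult; [|apply Un_cv_const].
      apply CV_minus; [apply Un_cv_const|]. apply CV_shift'. apply gam_cv.
Qed.

Lemma alpha0 : alpha 0 = 1.
Proof.
  apply UL_sequence with (fun n => aS n 0). apply alpha_cv.
  apply Un_cv_ext with (fun _ => 1); [|apply Un_cv_const].
  induction n as [|n IH]. unfold aS, sin_n. simpl. field.
  unfold aS in *. simpl sum_f_R0. rewrite <- IH. simpl. ring.
Qed.

Lemma beta0 : beta 0 = / 2.
Proof. unfold beta. destruct (Req_EM_T 0 0); [auto|lra]. Qed.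

Lemma ab_id x : 0 <= x -> 2 * beta x - alpha x ^ 2 - x * beta x ^ 2 = 0.
Proof.
  intros Hx. destruct (Req_EM_T x 0) as [H0|H0].
  - subst. rewrite alpha0, beta0. field.
  - assert (Hs : sin (sqrt x) = sqrt x * alpha x).
    { unfold sin. destruct (exist_sin (Rsqr (sqrt x))) as [a Ha].
      rewrite Rsqr_sqrt in Ha by lra. f_equal. eapply uniqueness_sum. exact Ha.
      apply alpha_cv. }
    assert (Hc : cos (sqrt x) = gam x).
    { unfold cos. destruct (exist_cos (Rsqr (sqrt x))) as [a Ha].
      rewrite Rsqr_sqrt in Ha by lra. eapply uniqueness_sum. exact Ha.
      apply gam_cv. }
    assert (Hb : gam x = 1 - x * beta x).
    { unfold beta. destruct (Req_EM_T x 0); [contradiction|]. field. auto. }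
    pose proof (sin2_cos2 (sqrt x)) as E. rewrite Hs, Hc, Hb in E.
    unfold Rsqr in E. rewrite Rmult_comm with (r1 := sqrt x) in E.
    assert (E2 : x * (2 * beta x - alpha x ^ 2 - x * beta x ^ 2) = 0).
    { replace (alpha x * sqrt x * (alpha x * sqrt x)) with (alpha x * alpha x * (sqrt x * sqrt x)) in E by ring.
      rewrite sqrt_sqrt in E by lra. nra. }
    apply Rmult_integral in E2. destruct E2; [contradiction|auto].
Qed.

Definition Rod (v : Vec) : Mat :=
  madd mid (madd (mscale (alpha (vdot v v)) (skew v))
                 (mscale (beta (vdot v v)) (mmul (skew v) (skew v)))).

Definition Ssum (A : Mat) (N : nat) (i j : I3) : R :=
  sum_f_R0 (fun k => mpow A k i j / INR (fact k)) N.

Section Skew.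
Variable v : Vec.
Let K := skew v.
Let x := vdot v v.

Lemma KK_K c (P : Mat) : (forall a b, P a b = c * K a b) ->
  forall i k, mmul K (mmul K P) i k = (-1) * x * c * K i k.
Proof. intros H i k. unfold mmul, sum3. rewrite !H. unfold x, vdot, sum3, K.
  destruct i, k; simpl; ring. Qed.

Lemma KK_K2 c (P : Mat) : (forall a b, P a b = c * mmul K K a b) ->
  forall i k, mmul K (mmul K P) i k = (-1) * x * c * mmul K K i k.
Proof. intros H i k. unfold mmul at 1 2. unfold sum3. rewrite !H.
  unfold x, vdot, mmul, sum3, K. destruct i, k; simpl; ring. Qed.

Lemma mpow_odd j : forall i k, mpow K (2 * j + 1) i k = (-1) ^ j * x ^ j * K i k.
Proof.
  induction j as [|j IH]; intros i k.
  - simpl. unfold mmul, mid, sum3, K. destruct i, k; simpl; ring.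
  - replace (2 * S j + 1)%nat with (S (S (2 * j + 1))) by lia. simpl mpow.
    rewrite (KK_K ((-1)^j * x^j) _ IH). simpl. ring.
Qed.

Lemma mpow_even j : forall i k, mpow K (2 * j + 2) i k = (-1) ^ j * x ^ j * mmul K K i k.
Proof.
  induction j as [|j IH]; intros i k.
  - simpl. unfold mmul, mid, sum3, K. destruct i, k; simpl; ring.
  - replace (2 * S j + 2)%nat with (S (S (2 * j + 2))) by lia. simpl mpow.
    rewrite (KK_K2 ((-1)^j * x^j) _ IH). simpl. ring.
Qed.

Lemma S_even n i k : Ssum K (2 * n + 2) i k = mid i k + aS n x * K i k + bS n x * mmul K K i k.
Proof.
  induction n as [|n IH].
  - pose proof (mpow_odd 0 i k) as E1. pose proof (mpow_even 0 i k) as E2. simpl in E1, E2.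
    unfold Ssum, aS, bS, bc, sin_n. simpl sum_f_R0. simpl in E1, E2 |- *.
    rewrite E1, E2. field.
  - replace (2 * S n + 2)%nat with (S (S (2 * n + 2))) by lia.
    unfold Ssum in *. rewrite !tech5, IH.
    replace (S (2 * n + 2)) with (2 * S n + 1)%nat by lia.
    replace (S (2 * S n + 1)) with (2 * S n + 2)%nat by lia.
    rewrite mpow_odd, mpow_even. unfold aS, bS. rewrite !tech5.
    unfold sin_n, bc. field. split; apply INR_fact_neq_0.
Qed.

Lemma S_odd n i k : Ssum K (2 * n + 3) i k = mid i k + aS (S n) x * K i k + bS n x * mmul K K i k.
Proof.
  replace (2 * n + 3)%nat with (S (2 * n + 2)) by lia. unfold Ssum. rewrite tech5.
  fold (Ssum K (2 * n + 2) i k). rewrite S_even.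
  replace (S (2 * n + 2)) with (2 * S n + 1)%nat by lia.
  rewrite mpow_odd. unfold aS. rewrite tech5. unfold sin_n. field. apply INR_fact_neq_0.
Qed.

End Skew.

Lemma cv_even_odd (u : nat -> R) l :
  Un_cv (fun n => u (2 * n + 2)%nat) l -> Un_cv (fun n => u (2 * n + 3)%nat) l -> Un_cv u l.
Proof.
  intros H1 H2 eps He. destruct (H1 eps He) as [N1 HN1]. destruct (H2 eps He) as [N2 HN2].
  exists (2 * (N1 + N2) + 3)%nat. intros n Hn.
  destruct (Nat.Even_or_Odd n) as [[m Hm]|[m Hm]].
  - replace n with (2 * (m - 1) + 2)%nat by lia. apply HN1. lia.
  - replace n with (2 * (m - 1) + 3)%nat by lia. apply HN2. lia.
Qed.

Lemma mexp_skew (v : Vec) : mexp (skew v) = Rod v.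
Proof.
  assert (H : is_mexp (skew v) (Rod v)).
  { intros i j. apply cv_even_odd.
    - apply Un_cv_ext with (fun n => mid i j + (aS n (vdot v v) * skew v i j + bS n (vdot v v) * mmul (skew v) (skew v) i j)).
      + intros n. transitivity (Ssum (skew v) (2*n+2) i j); [rewrite S_even; ring | reflexivity].
      + unfold Rod, madd, mscale. apply CV_plus. apply Un_cv_const. apply CV_plus.
        apply CV_mult. apply alpha_cv. apply Un_cv_const.
        apply CV_mult. apply beta_cv. apply Un_cv_const.
    - apply Un_cv_ext with (fun n => mid i j + (aS (n + 1) (vdot v v) * skew v i j + bS n (vdot v v) * mmul (skew v) (skew v) i j)).
      + intros n. transitivity (Ssum (skew v) (2*n+3) i j); [rewrite S_odd; replace (n + 1)%nat with (S n) by lia; ring | reflexivity].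
      + unfold Rod, madd, mscale. apply CV_plus. apply Un_cv_const. apply CV_plus.
        apply CV_mult. apply (CV_shift' (fun n => aS n (vdot v v))). apply alpha_cv. apply Un_cv_const.
        apply CV_mult. apply beta_cv. apply Un_cv_const. }
  assert (H2 : is_mexp (skew v) (mexp (skew v))).
  { unfold mexp. apply epsilon_spec. exists (Rod v). exact H. }
  apply functional_extensionality; intro i. apply functional_extensionality; intro j.
  exact (UL_sequence _ _ _ (H2 i j) (H i j)).
Qed.

Lemma vdot_nonneg v : 0 <= vdot v v.
Proof. unfold vdot, sum3. nra. Qed.

Lemma rod_orth v u : vdot (mvmul (Rod v) u) (mvmul (Rod v) u) = vdot u u.
Proof.
  pose proof (ab_id (vdot v v) (vdot_nonneg v)) as E.
  set (a := alpha (vdot v v)) in *. set (b := beta (vdot v v)) in *.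
  transitivity (vdot u u + (2 * b - a ^ 2 - vdot v v * b ^ 2) *
     ((vdot v u) ^ 2 - vdot v v * vdot u u)).
  - unfold Rod, a, b. set (a' := alpha (vdot v v)). set (b' := beta (vdot v v)).
    unfold mvmul, madd, mscale, mmul, mid, skew, vdot, sum3. simpl. ring.
  - rewrite E. ring.
Qed.

Lemma pow_lip i x y : 0 <= x <= 1 -> 0 <= y <= 1 -> Rabs (x ^ i - y ^ i) <= INR i * Rabs (x - y).
Proof.
  intros Hx Hy. induction i as [|i IH].
  - simpl. rewrite Rminus_diag, Rabs_R0. lra.
  - replace (x ^ S i - y ^ S i) with (x * (x ^ i - y ^ i) + y ^ i * (x - y)) by (simpl; ring).
    rewrite S_INR. eapply Rle_trans. apply Rabs_triang. rewrite !Rabs_mult.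
    assert (Hyi : 0 <= y ^ i <= 1). { split. apply pow_le; lra. rewrite <- (pow1 i). apply pow_incr; lra. }
    rewrite (Rabs_right x) by lra. rewrite (Rabs_right (y ^ i)) by lra.
    assert (0 <= Rabs (x ^ i - y ^ i)) by apply Rabs_pos.
    assert (0 <= Rabs (x - y)) by apply Rabs_pos. nra.
Qed.

Lemma fact_bounds i : (2 ^ i <= fact (2 * i + 1) /\ i * 2 ^ i <= fact (2 * i + 1))%nat.
Proof.
  induction i as [|i [IH1 IH2]].
  - simpl. lia.
  - replace (2 * S i + 1)%nat with (S (S (2 * i + 1))) by lia. rewrite !fact_simpl.
    rewrite Nat.pow_succ_r'. nia.
Qed.

Lemma coef_sin i : INR i * Rabs (sin_n i) <= (/ 2) ^ i.
Proof.
  unfold sin_n, Rdiv. rewrite Rabs_mult, Rabs_inv, pow_1_abs, (Rabs_right (INR _)).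
  2: { apply Rle_ge, pos_INR. }
  destruct (fact_bounds i) as [_ H]. apply le_INR in H. rewrite mult_INR, pow_INR in H.
  replace (INR 2) with 2 in H by (simpl; ring).
  assert (HF : 0 < INR (fact (2 * i + 1))) by (apply lt_0_INR, lt_O_fact).
  assert (H2 : 0 < 2 ^ i) by (apply pow_lt; lra).
  rewrite pow_inv. unfold Rdiv. rewrite Rmult_1_l.
  apply Rmult_le_reg_r with (INR (fact (2 * i + 1)) * 2 ^ i). nra.
  replace (INR i * / INR (fact (2 * i + 1)) * (INR (fact (2 * i + 1)) * 2 ^ i)) with (INR i * 2 ^ i) by (field; repeat split; lra).
  replace (/ 2 ^ i * (INR (fact (2 * i + 1)) * 2 ^ i)) with (INR (fact (2 * i + 1))) by (field; repeat split; lra). lra.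
Qed.

Lemma coef_bc i : INR i * Rabs (bc i) <= (/ 2) ^ i.
Proof.
  eapply Rle_trans; [|apply coef_sin]. apply Rmult_le_compat_l. apply pos_INR.
  unfold bc, sin_n, Rdiv. rewrite !Rabs_mult, !Rabs_inv, !pow_1_abs, !(Rabs_right (INR _)) by (apply Rle_ge, pos_INR).
  assert (HF : 0 < INR (fact (2 * i + 1))) by (apply lt_0_INR, lt_O_fact).
  assert (HF2 : INR (fact (2 * i + 1)) <= INR (fact (2 * i + 2))).
  { apply le_INR. replace (2 * i + 2)%nat with (S (2 * i + 1)) by lia. rewrite fact_simpl. nia. }
  unfold Rdiv. rewrite !Rmult_1_l. apply Rinv_le_contravar; lra.
Qed.

Lemma psum_lip (c : nat -> R) : (forall i, INR i * Rabs (c i) <= (/ 2) ^ i) ->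
  forall n x y, 0 <= x <= 1 -> 0 <= y <= 1 ->
  Rabs (sum_f_R0 (fun i => c i * x ^ i) n - sum_f_R0 (fun i => c i * y ^ i) n) <= (1 - (/2) ^ n) * Rabs (x - y).
Proof.
  intros Hc n x y Hx Hy. induction n as [|n IH].
  - simpl. rewrite Rminus_diag, Rabs_R0. lra.
  - rewrite !tech5.
    replace (sum_f_R0 (fun i => c i * x ^ i) n + c (S n) * x ^ S n -
      (sum_f_R0 (fun i => c i * y ^ i) n + c (S n) * y ^ S n)) with
      ((sum_f_R0 (fun i => c i * x ^ i) n - sum_f_R0 (fun i => c i * y ^ i) n) + c (S n) * (x ^ S n - y ^ S n)) by ring.
    eapply Rle_trans. apply Rabs_triang. rewrite Rabs_mult.
    pose proof (pow_lip (S n) x y Hx Hy). pose proof (Hc (S n)).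
    assert (0 <= Rabs (c (S n))) by apply Rabs_pos.
    assert (0 <= Rabs (x - y)) by apply Rabs_pos.
    assert (Rabs (c (S n)) * Rabs (x ^ S n - y ^ S n) <= (/ 2) ^ S n * Rabs (x - y)).
    { eapply Rle_trans. apply Rmult_le_compat_l; [lra|eauto]. nra. }
    simpl pow in *. lra.
Qed.

Lemma lim_lip (c : nat -> R) f : (forall i, INR i * Rabs (c i) <= (/ 2) ^ i) ->
  (forall x, Un_cv (fun n => sum_f_R0 (fun i => c i * x ^ i) n) (f x)) ->
  forall x y, 0 <= x <= 1 -> 0 <= y <= 1 -> Rabs (f x - f y) <= Rabs (x - y).
Proof.
  intros Hc Hf x y Hx Hy.
  apply (Rle_cv_lim (Un := fun n => Rabs (sum_f_R0 (fun i => c i * x ^ i) n - sum_f_R0 (fun i => c i * y ^ i) n))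
                    (Vn := fun _ => Rabs (x - y))).
  - intros n. eapply Rle_trans. apply psum_lip; auto.
    assert (0 < (/2) ^ n) by (apply pow_lt; lra). assert (0 <= Rabs (x - y)) by apply Rabs_pos. nra.
  - apply cv_cvabs. apply CV_minus; apply Hf.
  - apply Un_cv_const.
Qed.

Lemma alpha_lip x y : 0 <= x <= 1 -> 0 <= y <= 1 -> Rabs (alpha x - alpha y) <= Rabs (x - y).
Proof. apply (lim_lip sin_n). apply coef_sin. apply alpha_cv. Qed.

Lemma beta_lip x y : 0 <= x <= 1 -> 0 <= y <= 1 -> Rabs (beta x - beta y) <= Rabs (x - y).
Proof. apply (lim_lip bc). apply coef_bc. apply beta_cv. Qed.

Lemma alpha_near1 x : 0 <= x <= 1 -> Rabs (alpha x - 1) <= x.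
Proof. intros H. rewrite <- alpha0. eapply Rle_trans. apply alpha_lip; lra.
  rewrite Rminus_0_r, Rabs_right; lra. Qed.

Lemma beta_near x : 0 <= x <= 1 -> Rabs (beta x - / 2) <= x.
Proof. intros H. rewrite <- beta0. eapply Rle_trans. apply beta_lip; lra.
  rewrite Rminus_0_r, Rabs_right; lra. Qed.


Definition Ob (n : nat) (f : R -> R) : Prop :=
  exists C d, 0 < d /\ forall h, 0 < h < d -> Rabs (f h) <= C * h ^ n.

Lemma Ob_ext n f g : (forall h, 0 < h -> f h = g h) -> Ob n f -> Ob n g.
Proof. intros E [C [d [Hd H]]]. exists C, d. split; auto. intros h Hh. rewrite <- E by lra. auto. Qed.

Lemma Ob_le n f g : Ob n g -> (exists d, 0 < d /\ forall h, 0 < h < d -> Rabs (f h) <= Rabs (g h)) -> Ob n f.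
Proof. intros [C [d [Hd H]]] [d' [Hd' H']]. exists C, (Rmin d d'). split. apply Rmin_pos; auto.
  intros h Hh. assert (h < d) by (eapply Rlt_le_trans; [apply Hh|apply Rmin_l]).
  assert (h < d') by (eapply Rlt_le_trans; [apply Hh|apply Rmin_r]).
  eapply Rle_trans. apply H'; lra. apply H; lra. Qed.

Lemma Ob_zero n : Ob n (fun _ => 0).
Proof. exists 0, 1. split. lra. intros. rewrite Rabs_R0. lra. Qed.

Lemma Ob_const c : Ob 0 (fun _ => c).
Proof. exists (Rabs c), 1. split. lra. intros. simpl. lra. Qed.

Lemma Ob_C_nonneg n f C d : 0 < d -> (forall h, 0 < h < d -> Rabs (f h) <= C * h ^ n) -> 0 <= C.
Proof. intros Hd H. assert (Hh : 0 < d/2 < d) by lra. specialize (H _ Hh).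
  assert (0 <= Rabs (f (d/2))) by apply Rabs_pos. assert (0 < (d/2)^n) by (apply pow_lt; lra).
  destruct (Rle_or_lt 0 C); auto. nra. Qed.

Lemma Ob_add n f g : Ob n f -> Ob n g -> Ob n (fun h => f h + g h).
Proof. intros [C1 [d1 [Hd1 H1]]] [C2 [d2 [Hd2 H2]]]. exists (C1 + C2), (Rmin d1 d2).
  split. apply Rmin_pos; auto. intros h Hh.
  assert (h < d1) by (eapply Rlt_le_trans; [apply Hh|apply Rmin_l]).
  assert (h < d2) by (eapply Rlt_le_trans; [apply Hh|apply Rmin_r]).
  eapply Rle_trans. apply Rabs_triang. specialize (H1 h ltac:(lra)). specialize (H2 h ltac:(lra)). lra. Qed.

Lemma Ob_opp n f : Ob n f -> Ob n (fun h => - f h).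
Proof. intros [C [d [Hd H]]]. exists C, d. split; auto. intros. rewrite Rabs_Ropp. auto. Qed.

Lemma Ob_sub n f g : Ob n f -> Ob n g -> Ob n (fun h => f h - g h).
Proof. intros. apply Ob_add; auto. apply Ob_opp; auto. Qed.

Lemma Ob_mul n m f g : Ob n f -> Ob m g -> Ob (n + m) (fun h => f h * g h).
Proof. intros [C1 [d1 [Hd1 H1]]] [C2 [d2 [Hd2 H2]]]. exists (C1 * C2), (Rmin d1 d2).
  split. apply Rmin_pos; auto. intros h Hh.
  assert (h < d1) by (eapply Rlt_le_trans; [apply Hh|apply Rmin_l]).
  assert (h < d2) by (eapply Rlt_le_trans; [apply Hh|apply Rmin_r]).
  specialize (H1 h ltac:(lra)). specialize (H2 h ltac:(lra)).
  rewrite Rabs_mult, pow_add.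
  replace (C1 * C2 * (h ^ n * h ^ m)) with ((C1 * h ^ n) * (C2 * h ^ m)) by ring.
  apply Rmult_le_compat; auto; apply Rabs_pos. Qed.

Lemma Ob_weak m n f : (m <= n)%nat -> Ob n f -> Ob m f.
Proof. intros Hmn [C [d [Hd H]]]. assert (HC := Ob_C_nonneg _ _ _ _ Hd H).
  exists C, (Rmin d 1). split. apply Rmin_pos; lra. intros h Hh.
  assert (h < d) by (eapply Rlt_le_trans; [apply Hh|apply Rmin_l]).
  assert (h < 1) by (eapply Rlt_le_trans; [apply Hh|apply Rmin_r]).
  eapply Rle_trans. apply H; lra. apply Rmult_le_compat_l; auto.
  replace n with (m + (n - m))%nat by lia. rewrite pow_add.
  assert (0 < h ^ m) by (apply pow_lt; lra).
  assert (h ^ (n - m) <= 1). { rewrite <- (pow1 (n - m)). apply pow_incr. lra. }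
  assert (0 <= h ^ (n - m)) by (apply pow_le; lra). nra. Qed.

Lemma Ob_hpow n : Ob n (fun h => h ^ n).
Proof. exists 1, 1. split. lra. intros h Hh. rewrite Rabs_right. lra. apply Rle_ge, pow_le. lra. Qed.

Lemma Ob_scal n c f : Ob n f -> Ob n (fun h => c * f h).
Proof. intros H. apply (Ob_mul 0 n); auto. apply Ob_const. Qed.

Lemma Ob_hmul n f : Ob n f -> Ob (S n) (fun h => h * f h).
Proof. intros H. apply (Ob_mul 1 n); auto. apply (Ob_ext 1 (fun h => h ^ 1)). intros; ring. apply Ob_hpow. Qed.

Lemma Ob_small n f : Ob (S n) f -> forall e, 0 < e -> exists d, 0 < d /\ forall h, 0 < h < d -> Rabs (f h) <= e.
Proof. intros [C [d [Hd H]]] e He. assert (HC := Ob_C_nonneg _ _ _ _ Hd H).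
  exists (Rmin d (Rmin 1 (e / (C + 1)))). split. repeat apply Rmin_pos; try lra. apply Rdiv_lt_0_compat; lra.
  intros h Hh.
  assert (h < d) by (eapply Rlt_le_trans; [apply Hh|apply Rmin_l]).
  assert (h < 1) by (eapply Rlt_le_trans; [apply Hh|eapply Rle_trans; [apply Rmin_r|apply Rmin_l]]).
  assert (h < e / (C + 1)) by (eapply Rlt_le_trans; [apply Hh|eapply Rle_trans; [apply Rmin_r|apply Rmin_r]]).
  eapply Rle_trans. apply H; lra. simpl.
  assert (h ^ n <= 1). { rewrite <- (pow1 n). apply pow_incr. lra. }
  assert (0 <= h ^ n) by (apply pow_le; lra).
  assert (h * (C + 1) < e). { apply (Rmult_lt_compat_r (C+1)) in H2; [|lra]. unfold Rdiv in H2.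
    rewrite Rmult_assoc, Rinv_l in H2 by lra. lra. }
  nra. Qed.

Definition Jn (n : nat) (f : R -> R) (a b c : R) : Prop :=
  Ob n (fun h => f h - (a + h * b + h * h * c)).

Lemma Jn_ext n f g a b c : (forall h, 0 < h -> f h = g h) -> Jn n f a b c -> Jn n g a b c.
Proof. intros E H. eapply Ob_ext; [|exact H]. intros h Hh. simpl. rewrite E; auto. Qed.

Lemma Jn_coef n f a b c a' b' c' : Jn n f a b c -> a = a' -> b = b' -> c = c' -> Jn n f a' b' c'.
Proof. intros H -> -> ->. auto. Qed.

Lemma Jn_weak m n f a b c : (m <= n)%nat -> Jn n f a b c -> Jn m f a b c.
Proof. intros. eapply Ob_weak; eauto. Qed.

Lemma Jn_const n c : Jn n (fun _ => c) c 0 0.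
Proof. unfold Jn. eapply Ob_ext; [|apply Ob_zero]. intros; simpl; ring. Qed.

Lemma Jn_h n : Jn n (fun h => h) 0 1 0.
Proof. unfold Jn. eapply Ob_ext; [|apply Ob_zero]. intros; simpl; ring. Qed.

Lemma Jn_add n f g a b c a' b' c' : Jn n f a b c -> Jn n g a' b' c' ->
  Jn n (fun h => f h + g h) (a + a') (b + b') (c + c').
Proof. intros H1 H2. unfold Jn. eapply Ob_ext; [|apply (Ob_add _ _ _ H1 H2)]. intros; simpl; ring. Qed.

Lemma Jn_opp n f a b c : Jn n f a b c -> Jn n (fun h => - f h) (- a) (- b) (- c).
Proof. intros H1. unfold Jn. eapply Ob_ext; [|apply (Ob_opp _ _ H1)]. intros; simpl; ring. Qed.

Lemma Jn_sub n f g a b c a' b' c' : Jn n f a b c -> Jn n g a' b' c' ->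
  Jn n (fun h => f h - g h) (a - a') (b - b') (c - c').
Proof. intros H1 H2. unfold Jn. eapply Ob_ext; [|apply (Ob_sub _ _ _ H1 H2)]. intros; simpl; ring. Qed.

Lemma Ob_poly3 n (p : R -> R) : (n <= 3)%nat -> Ob 0 p -> Ob n (fun h => h * h * h * p h).
Proof. intros Hn Hp. apply (Ob_weak n 3); auto. apply (Ob_ext 3 (fun h => h^3 * p h)).
  intros; simpl; ring. apply (Ob_mul 3 0); auto. apply Ob_hpow. Qed.

Lemma Jn_Ob0 n f a b c : Jn n f a b c -> Ob 0 f.
Proof. intros H. apply (Ob_weak 0 n) in H; [|lia].
  apply (Ob_ext 0 (fun h => (f h - (a + h * b + h * h * c)) + (a + h * b + h * h * c))). intros; ring.
  apply Ob_add; auto. apply Ob_le with (fun _ => Rabs a + Rabs b + Rabs c).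
  apply Ob_const. exists 1. split. lra. intros h Hh.
  pose proof (Rabs_pos a); pose proof (Rabs_pos b); pose proof (Rabs_pos c).
  assert (HR: Rabs (Rabs a + Rabs b + Rabs c) = Rabs a + Rabs b + Rabs c) by (apply Rabs_right; lra).
  rewrite HR. pose proof (Rabs_triang (a + h*b) (h*h*c)). pose proof (Rabs_triang a (h*b)).
  assert (E1 : Rabs (h * b) = h * Rabs b) by (rewrite Rabs_mult, (Rabs_right h); lra).
  assert (E2 : Rabs (h * h * c) = h * h * Rabs c) by (rewrite !Rabs_mult, (Rabs_right h); [ring|lra]).
  rewrite E1 in *. rewrite E2 in *. assert (h * Rabs b <= Rabs b) by nra. assert (h * h <= 1) by nra. assert (h * h * Rabs c <= Rabs c) by nra. lra. Qed.

Lemma Jn_mul n f g a b c a' b' c' : (n <= 3)%nat -> Jn n f a b c -> Jn n g a' b' c' ->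
  Jn n (fun h => f h * g h) (a * a') (a * b' + b * a') (a * c' + b * b' + c * a').
Proof. intros Hn H1 H2. unfold Jn.
  set (p := fun h => a + h * b + h * h * c). set (q := fun h => a' + h * b' + h * h * c').
  apply (Ob_ext n (fun h => f h * (g h - q h) + (f h - p h) * q h +
      h * h * h * (b * c' + c * b' + h * c * c'))).
  { intros h _. unfold p, q. ring. }
  apply Ob_add. apply Ob_add.
  - apply (Ob_mul 0 n); auto. eapply Jn_Ob0; eauto.
  - replace n with (n + 0)%nat by lia. apply Ob_mul; auto. apply (Jn_Ob0 n q a' b' c').
    unfold Jn, q. eapply Ob_ext; [|apply Ob_zero]. intros; simpl; ring.
  - apply Ob_poly3; auto. apply Ob_add. apply Ob_const.
    apply (Ob_weak 0 1); [lia|]. apply (Ob_ext 1 (fun h => (c*c') * h^1)). intros; simpl; ring.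
    apply Ob_scal. apply Ob_hpow. Qed.

Lemma Jn_scal n k f a b c : (n <= 3)%nat -> Jn n f a b c -> Jn n (fun h => k * f h) (k * a) (k * b) (k * c).
Proof. intros Hn H. eapply Jn_coef. apply (Jn_mul n (fun _ => k) f k 0 0 a b c Hn (Jn_const n k) H). all: ring. Qed.

Lemma Jn_hmul n f a b c : (n <= 2)%nat -> Jn n f a b c -> Jn (S n) (fun h => h * f h) 0 a b.
Proof. intros Hn H. unfold Jn in *.
  apply (Ob_ext (S n) (fun h => h * (f h - (a + h * b + h * h * c)) + h * h * h * c)).
  { intros; ring. }
  apply Ob_add. apply Ob_hmul; auto. apply Ob_poly3. lia. apply Ob_const. Qed.

Lemma Jn_eq n f g a b c : Jn n f a b c -> Jn n g a b c -> Ob n (fun h => f h - g h).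
Proof. intros H1 H2. eapply Ob_ext; [|apply (Ob_sub _ _ _ H1 H2)]. intros; simpl; ring. Qed.

Lemma Jn_poly n a b c : Jn n (fun h => a + h * b + h * h * c) a b c.
Proof. unfold Jn. eapply Ob_ext; [|apply Ob_zero]. intros; simpl; ring. Qed.

Lemma Jn0_of_Ob0 f a b c : Ob 0 f -> Jn 0 f a b c.
Proof. intros H. unfold Jn. apply Ob_sub; auto. eapply Jn_Ob0. apply (Jn_poly 0). Qed.

Lemma cont_bounded (k : R -> R) : (forall x, continuity_pt k x) ->
  forall a b, exists M, forall x, a <= x <= b -> Rabs (k x) <= M.
Proof.
  intros Hk a b. destruct (Rle_or_lt a b) as [Hab|Hab].
  - destruct (continuity_ab_maj (fun x => Rabs (k x)) a b Hab) as [Mx [HM _]].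
    { intros c _. apply continuity_pt_comp with (f1 := k) (f2 := Rabs). apply Hk. apply Rcontinuity_abs. }
    exists (Rabs (k Mx)). auto.
  - exists 0. intros; lra.
Qed.

Lemma mvt_lip (f g : R -> R) a b M : (forall x, derivable_pt_lim f x (g x)) ->
  (forall x, a <= x <= b -> Rabs (g x) <= M) ->
  forall x y, a <= x <= b -> a <= y <= b -> Rabs (f x - f y) <= M * Rabs (x - y).
Proof.
  intros Hf Hg. assert (Hmain : forall x y, a <= x <= b -> a <= y <= b -> x < y -> Rabs (f x - f y) <= M * Rabs (x - y)).
  { intros x y Hx Hy Hxy. destruct (MVT_cor2 f g x y Hxy) as [c [Hc1 Hc2]]. intros; apply Hf.
    rewrite <- Rabs_Ropp. replace (- (f x - f y)) with (f y - f x) by ring. rewrite Hc1, Rabs_mult.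
    rewrite <- (Rabs_Ropp (x - y)). replace (- (x - y)) with (y - x) by ring.
    apply Rmult_le_compat_r. apply Rabs_pos. apply Hg. lra. }
  intros x y Hx Hy. destruct (Rtotal_order x y) as [H|[H|H]].
  - auto.
  - subst. rewrite !Rminus_diag, Rabs_R0. lra.
  - rewrite <- Rabs_Ropp, <- (Rabs_Ropp (x - y)).
    replace (- (f x - f y)) with (f y - f x) by ring. replace (- (x - y)) with (y - x) by ring. auto.
Qed.

Lemma taylor1 (f g k : R -> R) a b M : (forall x, derivable_pt_lim f x (g x)) ->
  (forall x, derivable_pt_lim g x (k x)) ->
  (forall x, a <= x <= b -> Rabs (k x) <= M) ->
  forall x y, a <= x <= b -> a <= y <= b -> Rabs (f y - f x - g x * (y - x)) <= M * (y - x) ^ 2.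
Proof.
  intros Hf Hg Hk.
  assert (Hl := mvt_lip g k a b M Hg Hk).
  assert (Hmain : forall x y c, a <= x <= b -> a <= y <= b -> Rmin x y <= c <= Rmax x y ->
     f y - f x = g c * (y - x) -> Rabs (f y - f x - g x * (y - x)) <= M * (y - x) ^ 2).
  { intros x y c Hx Hy Hc E. rewrite E.
    replace (g c * (y - x) - g x * (y - x)) with ((g c - g x) * (y - x)) by ring.
    rewrite Rabs_mult. assert (Hca : a <= c <= b).
    { split. eapply Rle_trans; [|apply Hc]. apply Rmin_glb; lra. eapply Rle_trans; [apply Hc|]. apply Rmax_lub; lra. }
    assert (H1 := Hl c x Hca Hx). assert (Rabs (c - x) <= Rabs (y - x)).
    { unfold Rmin, Rmax in Hc. destruct (Rle_dec x y); unfold Rabs; destruct Rcase_abs; destruct Rcase_abs; lra. }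
    assert (0 <= M) by (pose proof (Rabs_pos (k x)); pose proof (Hk x Hx); lra).
    assert (Rabs (y - x) ^ 2 = (y - x) ^ 2) by (rewrite RPow_abs; apply Rabs_right; apply Rle_ge, pow2_ge_0).
    pose proof (Rabs_pos (y - x)). pose proof (Rabs_pos (g c - g x)).
    match goal with E : Rabs (y - x) ^ 2 = _ |- _ => rewrite <- E end.
    apply Rle_trans with (M * Rabs (c - x) * Rabs (y - x)). apply Rmult_le_compat_r; auto.
    simpl. rewrite Rmult_1_r, <- Rmult_assoc. apply Rmult_le_compat_r; auto. apply Rmult_le_compat_l; auto. }
  intros x y Hx Hy. destruct (Rtotal_order x y) as [H|[H|H]].
  - destruct (MVT_cor2 f g x y H) as [c [Hc1 Hc2]]. intros; apply Hf.
    apply (Hmain x y c); auto. rewrite Rmin_left, Rmax_right; lra.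
  - subst. replace (f y - f y - g y * (y - y)) with 0 by ring. rewrite Rabs_R0.
    assert (0 <= M) by (pose proof (Rabs_pos (k y)); pose proof (Hk y Hx); lra). simpl. nra.
  - destruct (MVT_cor2 f g y x H) as [c [Hc1 Hc2]]. intros; apply Hf.
    apply (Hmain x y c); auto. rewrite Rmin_right, Rmax_left; lra.
    replace (f y - f x) with (- (f x - f y)) by ring. rewrite Hc1. ring.
Qed.

Module DerM.
Import Coquelicot.Coquelicot.
Lemma dpoly (a b c t0 x : R) : derivable_pt_lim (fun t => a*(t-t0) + b/2*(t-t0)^2 + c/3*(t-t0)^3) x (a + b*(x-t0) + c*(x-t0)^2).
Proof. apply is_derive_Reals. auto_derive. auto. simpl. field. Qed.
End DerM.

Lemma integ k (f g : R -> R) t0 d0 a b c : (k <= 2)%nat -> 0 < d0 ->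
  (forall t, t0 <= t <= t0 + d0 -> derivable_pt_lim f t (g t)) ->
  Jn k (fun h => g (t0 + h)) a b c -> Jn (S k) (fun h => f (t0 + h)) (f t0) a (b / 2).
Proof.
  intros Hk Hd0 Hf [C [d [Hd H]]]. assert (HC := Ob_C_nonneg _ _ _ _ Hd H).
  set (psi := fun t => f t - (a*(t-t0) + b/2*(t-t0)^2 + c/3*(t-t0)^3)).
  exists (C + Rabs c), (Rmin d (Rmin d0 1)). split. repeat apply Rmin_pos; lra.
  intros h Hh.
  assert (h < d) by (eapply Rlt_le_trans; [apply Hh|apply Rmin_l]).
  assert (h < d0) by (eapply Rlt_le_trans; [apply Hh|eapply Rle_trans; [apply Rmin_r|apply Rmin_l]]).
  assert (h < 1) by (eapply Rlt_le_trans; [apply Hh|eapply Rle_trans; [apply Rmin_r|apply Rmin_r]]).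
  destruct (MVT_cor2 psi (fun t => g t - (a + b*(t-t0) + c*(t-t0)^2)) t0 (t0 + h)) as [xi [Hxi1 Hxi2]].
  { lra. }
  { intros t Ht. unfold psi. apply derivable_pt_lim_minus. apply Hf. lra. apply DerM.dpoly. }
  assert (Hs : 0 < xi - t0 < d) by lra.
  specialize (H _ Hs). replace (t0 + (xi - t0)) with xi in H by ring.
  assert (Hpw : (xi - t0) ^ k <= h ^ k) by (apply pow_incr; lra).
  assert (Hhk : 0 <= h ^ k) by (apply pow_le; lra).
  assert (Hpsi : Rabs (psi (t0 + h) - psi t0) <= C * h ^ k * h).
  { rewrite Hxi1, Rabs_mult. replace (t0 + h - t0) with h by ring. rewrite (Rabs_right h) by lra.
    apply Rmult_le_compat_r. lra. eapply Rle_trans; [|apply Rmult_le_compat_l; [exact HC|exact Hpw]].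
    eapply Rle_trans; [|exact H]. right. f_equal. ring. }
  replace (f (t0 + h) - (f t0 + h * a + h * h * (b / 2))) with
     ((psi (t0 + h) - psi t0) + c / 3 * h ^ 3).
  2: { unfold psi. replace (t0 + h - t0) with h by ring. replace (t0 - t0) with 0 by ring. simpl. field. }
  eapply Rle_trans. apply Rabs_triang. rewrite Rmult_plus_distr_r.
  apply Rplus_le_compat.
  - eapply Rle_trans. exact Hpsi. right. simpl. ring.
  - rewrite Rabs_mult. unfold Rdiv. rewrite Rabs_mult, (Rabs_right (/3)) by lra.
    rewrite (Rabs_right (h^3)) by (apply Rle_ge, pow_le; lra).
    assert (h ^ 3 <= h ^ S k).
    { replace 3%nat with (S k + (2 - k))%nat by lia. rewrite pow_add.
      assert (h ^ (2 - k) <= 1) by (rewrite <- (pow1 (2 - k)); apply pow_incr; lra).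
      assert (0 <= h ^ S k) by (apply pow_le; lra). assert (0 <= h ^ (2-k)) by (apply pow_le; lra). nra. }
    pose proof (Rabs_pos c). assert (0 <= h^3) by (apply pow_le; lra). nra.
Qed.

Lemma Ob0_bound f : Ob 0 f -> exists B d, 0 < d /\ forall h, 0 < h < d -> Rabs (f h) <= B.
Proof. intros [C [d [Hd H]]]. exists C, d. split; auto. intros h Hh. specialize (H h Hh). simpl in H. lra. Qed.

Lemma deriv_cont (f g : R -> R) : (forall x, derivable_pt_lim f x (g x)) -> forall x, continuity_pt f x.
Proof. intros Hf x. apply derivable_continuous_pt. exists (g x). apply Hf. Qed.

Lemma Ob0_comp (f : R -> R) y : (forall x, continuity_pt f x) -> Ob 0 y -> Ob 0 (fun h => f (y h)).
Proof. intros Hf Hy. destruct (Ob0_bound _ Hy) as [B [d [Hd HB]]].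
  destruct (cont_bounded f Hf (-B) B) as [M HM]. exists M, d. split; auto. intros h Hh. simpl.
  rewrite Rmult_1_r. apply HM. specialize (HB h Hh). unfold Rabs in HB. destruct Rcase_abs; lra. Qed.

Lemma Ob_lipcomp (f g : R -> R) n y z : (forall x, derivable_pt_lim f x (g x)) -> (forall x, continuity_pt g x) ->
  Ob 0 y -> Ob 0 z -> Ob n (fun h => y h - z h) -> Ob n (fun h => f (y h) - f (z h)).
Proof.
  intros Hf Hg Hy Hz Hyz. destruct (Ob0_bound _ Hy) as [B1 [d1 [Hd1 HB1]]].
  destruct (Ob0_bound _ Hz) as [B2 [d2 [Hd2 HB2]]].
  destruct (cont_bounded g Hg (-(Rabs B1 + Rabs B2)) (Rabs B1 + Rabs B2)) as [M HM].
  apply Ob_le with (fun h => M * (y h - z h)). apply Ob_scal; auto.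
  exists (Rmin d1 d2). split. apply Rmin_pos; auto. intros h Hh.
  assert (h < d1) by (eapply Rlt_le_trans; [apply Hh|apply Rmin_l]).
  assert (h < d2) by (eapply Rlt_le_trans; [apply Hh|apply Rmin_r]).
  specialize (HB1 h ltac:(lra)). specialize (HB2 h ltac:(lra)).
  pose proof (Rle_abs B1). pose proof (Rle_abs B2). pose proof (Rabs_pos B1). pose proof (Rabs_pos B2).
  assert (Iy : -(Rabs B1 + Rabs B2) <= y h <= Rabs B1 + Rabs B2) by (unfold Rabs in HB1; destruct Rcase_abs in HB1; lra).
  assert (Iz : -(Rabs B1 + Rabs B2) <= z h <= Rabs B1 + Rabs B2) by (unfold Rabs in HB2; destruct Rcase_abs in HB2; lra).
  eapply Rle_trans. apply (mvt_lip f g _ _ M Hf HM); auto. rewrite Rabs_mult. apply Rmult_le_compat_r. apply Rabs_pos. apply Rle_abs.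
Qed.

Lemma Ob1_h_poly b c : Ob 1 (fun h => h * b + h * h * c).
Proof. apply (Ob_ext 1 (fun h => h * (b + h * c + h * h * 0))). intros; ring.
  apply Ob_hmul. eapply Jn_Ob0. apply (Jn_poly 0). Qed.

Lemma Jn_comp (f g k : R -> R) n y a b c : (forall x, derivable_pt_lim f x (g x)) ->
  (forall x, derivable_pt_lim g x (k x)) -> (forall x, continuity_pt k x) -> (n <= 2)%nat ->
  Jn n y a b c -> Jn n (fun h => f (y h)) (f a) (g a * b) (g a * c).
Proof.
  intros Hf Hg Hk Hn Hy. destruct n as [|n].
  - apply Jn0_of_Ob0. apply Ob0_comp. eapply deriv_cont; eauto. eapply Jn_Ob0; eauto.
  - assert (Hya : Ob 1 (fun h => y h - a)).
    { apply (Ob_ext 1 (fun h => (y h - (a + h * b + h * h * c)) + (h * b + h * h * c))). intros; ring.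
      apply Ob_add. apply (Ob_weak 1 (S n)). lia. exact Hy. apply Ob1_h_poly. }
    destruct (Ob_small 0 _ Hya 1 ltac:(lra)) as [d1 [Hd1 H1]].
    destruct (cont_bounded k Hk (a - 1) (a + 1)) as [M HM].
    assert (HT : Ob 2 (fun h => f (y h) - f a - g a * (y h - a))).
    { apply Ob_le with (fun h => M * ((y h - a) * (y h - a))).
      apply Ob_scal. apply (Ob_mul 1 1); auto.
      exists d1. split; auto. intros h Hh. specialize (H1 h Hh).
      assert (Iy : a - 1 <= y h <= a + 1) by (unfold Rabs in H1; destruct Rcase_abs in H1; lra).
      eapply Rle_trans. apply (taylor1 f g k (a-1) (a+1) M Hf Hg HM). lra. lra.
      eapply Rle_trans; [|apply Rle_abs]. right. ring. }
    unfold Jn. apply (Ob_ext (S n) (fun h => (f (y h) - f a - g a * (y h - a)) + g a * (y h - (a + h * b + h * h * c)))).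
    intros; ring. apply Ob_add. apply (Ob_weak (S n) 2). lia. exact HT. apply Ob_scal. exact Hy.
Qed.

Lemma smooth_J2 (f : R -> R) (F : nat -> R -> R) t0 : F O = f ->
  (forall n x, derivable_pt_lim (F n) x (F (S n) x)) ->
  Jn 2 (fun h => f (t0 + h)) (f t0) (F 1%nat t0) 0.
Proof.
  intros HF0 HF. destruct (cont_bounded (F 2%nat) (deriv_cont _ _ (HF 2%nat)) (t0 - 1) (t0 + 1)) as [M HM].
  exists M, 1. split. lra. intros h Hh. subst f.
  eapply Rle_trans. 2: { apply Rle_trans with (M * ((t0 + h) - t0) ^ 2). 2: { right. f_equal. ring. }
  apply (taylor1 (F 0%nat) (F 1%nat) (F 2%nat) (t0 - 1) (t0 + 1) M (HF 0%nat) (HF 1%nat) HM); lra. }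
  right. f_equal. ring.
Qed.

Lemma Jn_dropc n f a b c : (n <= 2)%nat -> Jn n f a b c -> Jn n f a b 0.
Proof. intros Hn H. unfold Jn in *. apply (Ob_ext n (fun h => (f h - (a + h * b + h * h * c)) + h * h * h * (c / h))).
  intros h Hh. field. lra. apply Ob_add; auto.
  apply (Ob_ext n (fun h => h * h * c)). intros h Hh. field. lra.
  apply (Ob_weak n 2). auto. apply (Ob_ext 2 (fun h => c * h ^ 2)). intros; simpl; ring. apply Ob_scal, Ob_hpow. Qed.

Lemma Ob_ext_ev n f g : (exists d, 0 < d /\ forall h, 0 < h < d -> f h = g h) -> Ob n f -> Ob n g.
Proof. intros [d [Hd E]] [C [d' [Hd' H]]]. exists C, (Rmin d d'). split. apply Rmin_pos; auto.
  intros h Hh. assert (h < d) by (eapply Rlt_le_trans; [apply Hh|apply Rmin_l]).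
  assert (h < d') by (eapply Rlt_le_trans; [apply Hh|apply Rmin_r]).
  rewrite <- E by lra. apply H; lra. Qed.

Lemma Jn_ext_ev n f g a b c : (exists d, 0 < d /\ forall h, 0 < h < d -> f h = g h) -> Jn n f a b c -> Jn n g a b c.
Proof. intros [d [Hd E]] H. eapply Ob_ext_ev; [|exact H]. exists d. split; auto. intros h Hh. simpl. rewrite E; auto. Qed.


Definition JV n (v : R -> Vec) (a b c : Vec) : Prop :=
  forall i, Jn n (fun h => v h i) (a i) (b i) (c i).
Definition JM n (A : R -> Mat) (a b c : Mat) : Prop :=
  forall i j, Jn n (fun h => A h i j) (a i j) (b i j) (c i j).

Ltac jrec :=
  match goal with
  | |- Jn _ (fun _ => ?c) _ _ _ => apply Jn_const
  | |- Jn _ (fun h => h) _ _ _ => apply Jn_h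
  | H : JV ?n ?v _ _ _ |- Jn ?m (fun h => ?v h ?i) _ _ _ =>
      first [apply H | eapply Jn_weak; [|apply H]; lia]
  | H : JM ?n ?v _ _ _ |- Jn ?m (fun h => ?v h ?i ?j) _ _ _ =>
      first [apply H | eapply Jn_weak; [|apply H]; lia]
  | H : Jn ?n ?f _ _ _ |- Jn ?m ?f _ _ _ =>
      first [apply H | eapply Jn_weak; [|apply H]; lia]
  | |- Jn _ (fun h => _ + _) _ _ _ => apply Jn_add; jrec
  | |- Jn _ (fun h => _ - _) _ _ _ => apply Jn_sub; jrec
  | |- Jn _ (fun h => - _) _ _ _ => apply Jn_opp; jrec
  | |- Jn _ (fun h => _ * _) _ _ _ => apply Jn_mul; [lia|jrec|jrec]
  end.

Ltac unf := unfold U0, Lmat, SL, frob, trace, vex, cross, vdot, mvmul, mmul, madd, msub, mscale, mtr,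
   vadd, vsub, vscale, skew, sum3, vec3, mid, Rdiv.

Ltac jsolve := eapply Jn_coef; [jrec| | | ]; try (unf; simpl; ring).

Lemma JV_Ob1 n v b c : (1 <= n)%nat -> JV n v (fun _ => 0) b c -> forall i, Ob 1 (fun h => v h i).
Proof. intros Hn H i. apply (Ob_ext 1 (fun h => (v h i - (0 + h * b i + h * h * c i)) + (h * b i + h * h * c i))).
  intros; ring. apply Ob_add. apply (Ob_weak 1 n); auto. apply H. apply Ob1_h_poly. Qed.

Lemma Ob1_sq f g : Ob 1 f -> Ob 1 g -> Ob 2 (fun h => f h * g h).
Proof. intros. apply (Ob_mul 1 1); auto. Qed.

Lemma rod_expand (v : R -> Vec) : (forall i, Ob 1 (fun h => v h i)) ->
  forall i j, Ob 3 (fun h => Rod (v h) i j - (mid i j + skew (v h) i j + / 2 * mmul (skew (v h)) (skew (v h)) i j)).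
Proof.
  intros Hv i j.
  assert (Hx : Ob 2 (fun h => vdot (v h) (v h))).
  { unfold vdot, sum3. repeat apply Ob_add; apply Ob1_sq; auto. }
  destruct (Ob_small 1 _ Hx 1 ltac:(lra)) as [d1 [Hd1 H1]].
  assert (HK : forall a b, Ob 1 (fun h => skew (v h) a b)).
  { intros a b. destruct a, b; simpl; try apply Ob_zero; try apply Ob_opp; auto. }
  assert (HK2 : forall a b, Ob 2 (fun h => mmul (skew (v h)) (skew (v h)) a b)).
  { intros a b. unfold mmul, sum3. repeat apply Ob_add; apply Ob1_sq; auto. }
  apply (Ob_ext 3 (fun h => (alpha (vdot (v h) (v h)) - 1) * skew (v h) i j +
       (beta (vdot (v h) (v h)) - / 2) * mmul (skew (v h)) (skew (v h)) i j)).
  { intros h _. unfold Rod, madd, mscale. ring. }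
  apply Ob_add.
  - apply (Ob_mul 2 1); auto. apply Ob_le with (fun h => vdot (v h) (v h)); auto.
    exists d1. split; auto. intros h Hh. specialize (H1 h Hh). pose proof (vdot_nonneg (v h)).
    rewrite (Rabs_right (vdot _ _)) by lra. apply alpha_near1.
    rewrite Rabs_right in H1 by lra. lra.
  - apply (Ob_weak 3 4). lia. apply (Ob_mul 2 2); auto. apply Ob_le with (fun h => vdot (v h) (v h)); auto.
    exists d1. split; auto. intros h Hh. specialize (H1 h Hh). pose proof (vdot_nonneg (v h)).
    rewrite (Rabs_right (vdot _ _)) by lra. apply beta_near.
    rewrite Rabs_right in H1 by lra. lra.
Qed.

Lemma rod_J n (v : R -> Vec) b c : (1 <= n <= 3)%nat -> JV n v (fun _ => 0) b c ->
  JM n (fun h => Rod (v h)) mid (skew b) (madd (skew c) (mscale (/2) (mmul (skew b) (skew b)))).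
Proof.
  intros Hn Hv i j. assert (Hv1 := JV_Ob1 n v b c ltac:(lia) Hv).
  unfold Jn. apply (Ob_ext n (fun h => (Rod (v h) i j - (mid i j + skew (v h) i j + / 2 * mmul (skew (v h)) (skew (v h)) i j))
     + ((mid i j + skew (v h) i j + / 2 * mmul (skew (v h)) (skew (v h)) i j) -
       (mid i j + h * skew b i j + h * h * madd (skew c) (mscale (/2) (mmul (skew b) (skew b))) i j)))).
  { intros; ring. }
  apply Ob_add. apply (Ob_weak n 3). lia. apply rod_expand; auto.
  assert (J : Jn n (fun h => mid i j + skew (v h) i j + / 2 * mmul (skew (v h)) (skew (v h)) i j)
      (mid i j) (skew b i j) (madd (skew c) (mscale (/2) (mmul (skew b) (skew b))) i j)).
  { destruct i, j; unf; simpl; jsolve. }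
  exact J.
Qed.

Lemma vec_choice (P : I3 -> R -> Prop) : (forall k, exists x, P k x) -> exists v : Vec, forall k, P k (v k).
Proof. intros H. destruct (H I0) as [x0 H0]. destruct (H I1) as [x1 H1]. destruct (H I2) as [x2 H2].
  exists (vec3 x0 x1 x2). intros k; destruct k; auto. Qed.


Lemma inv3_correct (A : Mat) (v : Vec) : det3 A <> 0 -> forall i, mvmul A (mvmul (inv3 A) v) i = v i.
Proof. intros Hd i. unfold inv3. unfold det3, cof, mvmul, sum3 in *. simpl in *. destruct i; simpl; field; auto. Qed.

Lemma mscale_skew c x : mscale c (skew x) = skew (vscale c x).
Proof. apply functional_extensionality; intro i; apply functional_extensionality; intro j.
  unfold mscale, skew, vscale. destruct i, j; ring. Qed.

Lemma abs_prod_diff a b a' b' : Rabs (a * b - a' * b') <= Rabs (a - a') * Rabs b + Rabs a' * Rabs (b - b').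
Proof. replace (a * b - a' * b') with ((a - a') * b + a' * (b - b')) by ring.
  rewrite <- !Rabs_mult. apply Rabs_triang. Qed.

Lemma skew_bound v r : (forall k, Rabs (v k) <= r) -> forall i j, Rabs (skew v i j) <= r.
Proof. intros H i j. assert (0 <= r) by (pose proof (H I0); pose proof (Rabs_pos (v I0)); lra).
  destruct i, j; simpl; rewrite ?Rabs_Ropp, ?Rabs_R0; auto. Qed.

Lemma skew_sub v v' i j : skew v i j - skew v' i j = skew (vsub v v') i j.
Proof. unfold vsub; destruct i, j; simpl; ring. Qed.

Lemma sum3_abs (f : I3 -> R) : Rabs (sum3 f) <= sum3 (fun k => Rabs (f k)).
Proof. unfold sum3. eapply Rle_trans. apply Rabs_triang. pose proof (Rabs_triang (f I0) (f I1)). lra. Qed.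

Lemma mmul_bound A B r s : (forall i j, Rabs (A i j) <= r) -> (forall i j, Rabs (B i j) <= s) ->
  forall i j, Rabs (mmul A B i j) <= 3 * (r * s).
Proof. intros HA HB i j. unfold mmul. eapply Rle_trans. apply sum3_abs. unfold sum3.
  assert (forall k, Rabs (A i k * B k j) <= r * s).
  { intros k. rewrite Rabs_mult. apply Rmult_le_compat; auto; apply Rabs_pos. }
  pose proof (H I0); pose proof (H I1); pose proof (H I2). lra. Qed.

Lemma mmul_diff A B A' B' r s d e : (forall i j, Rabs (B i j) <= s) -> (forall i j, Rabs (A' i j) <= r) ->
  (forall i j, Rabs (A i j - A' i j) <= d) -> (forall i j, Rabs (B i j - B' i j) <= e) ->
  forall i j, Rabs (mmul A B i j - mmul A' B' i j) <= 3 * (d * s + r * e).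
Proof. intros HB HA' Hd He i j. unfold mmul, sum3.
  assert (forall k, Rabs (A i k * B k j - A' i k * B' k j) <= d * s + r * e).
  { intros k. eapply Rle_trans. apply abs_prod_diff.
    apply Rplus_le_compat; apply Rmult_le_compat; auto; apply Rabs_pos. }
  pose proof (H I0); pose proof (H I1); pose proof (H I2).
  replace (A i I0 * B I0 j + A i I1 * B I1 j + A i I2 * B I2 j - (A' i I0 * B' I0 j + A' i I1 * B' I1 j + A' i I2 * B' I2 j))
    with ((A i I0 * B I0 j - A' i I0 * B' I0 j) + (A i I1 * B I1 j - A' i I1 * B' I1 j) + (A i I2 * B I2 j - A' i I2 * B' I2 j)) by ring.
  eapply Rle_trans. apply Rabs_triang. pose proof (Rabs_triang (A i I0 * B I0 j - A' i I0 * B' I0 j) (A i I1 * B I1 j - A' i I1 * B' I1 j)). lra. Qed.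

Lemma sq_small x : Rabs x <= / 2 -> x * x <= / 4.
Proof. intros H. assert (Rabs x * Rabs x = x * x) by (rewrite <- Rabs_mult; apply Rabs_right; nra).
  pose proof (Rabs_pos x). nra. Qed.

Lemma vdot_small v : (forall k, Rabs (v k) <= / 2) -> 0 <= vdot v v <= 1.
Proof. intros H. split. apply vdot_nonneg. unfold vdot, sum3.
  pose proof (sq_small _ (H I0)); pose proof (sq_small _ (H I1)); pose proof (sq_small _ (H I2)). lra. Qed.

Lemma vdot_diff v v' d : (forall k, Rabs (v k) <= / 2) -> (forall k, Rabs (v' k) <= / 2) ->
  (forall k, Rabs (v k - v' k) <= d) -> Rabs (vdot v v - vdot v' v') <= 3 * d.
Proof. intros H H' Hd. unfold vdot, sum3.
  assert (forall k, Rabs (v k * v k - v' k * v' k) <= d).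
  { intros k. eapply Rle_trans. apply abs_prod_diff. pose proof (H k); pose proof (H' k); pose proof (Hd k).
    pose proof (Rabs_pos (v k)); pose proof (Rabs_pos (v' k)); pose proof (Rabs_pos (v k - v' k)). nra. }
  replace (v I0 * v I0 + v I1 * v I1 + v I2 * v I2 - (v' I0 * v' I0 + v' I1 * v' I1 + v' I2 * v' I2))
    with ((v I0 * v I0 - v' I0 * v' I0) + (v I1 * v I1 - v' I1 * v' I1) + (v I2 * v I2 - v' I2 * v' I2)) by ring.
  eapply Rle_trans. apply Rabs_triang. pose proof (Rabs_triang (v I0 * v I0 - v' I0 * v' I0) (v I1 * v I1 - v' I1 * v' I1)).
  pose proof (H0 I0); pose proof (H0 I1); pose proof (H0 I2). lra. Qed.

Lemma rod_lip v v' d : (forall k, Rabs (v k) <= / 2) -> (forall k, Rabs (v' k) <= / 2) ->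
  (forall k, Rabs (v k - v' k) <= d) -> forall i j, Rabs (Rod v i j - Rod v' i j) <= 12 * d.
Proof.
  intros H H' Hd i j. assert (Hd0 : 0 <= d) by (pose proof (Hd I0); pose proof (Rabs_pos (v I0 - v' I0)); lra).
  pose proof (vdot_small v H) as Hx. pose proof (vdot_small v' H') as Hx'.
  pose proof (vdot_diff v v' d H H' Hd) as Hxd.
  set (x := vdot v v) in *. set (x' := vdot v' v') in *.
  assert (Ha : Rabs (alpha x - alpha x') <= 3 * d) by (eapply Rle_trans; [apply alpha_lip; lra|exact Hxd]).
  assert (Hb : Rabs (beta x - beta x') <= 3 * d) by (eapply Rle_trans; [apply beta_lip; lra|exact Hxd]).
  assert (Ha' : Rabs (alpha x') <= 2).
  { pose proof (alpha_near1 x' Hx'). pose proof (Rabs_triang_inv (alpha x') 1). rewrite Rabs_R1 in H1. lra. }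
  assert (Hb' : Rabs (beta x') <= 2).
  { pose proof (beta_near x' Hx'). pose proof (Rabs_triang_inv (beta x') (/2)). rewrite (Rabs_right (/2)) in H1 by lra. lra. }
  assert (HK : forall i j, Rabs (skew v i j) <= / 2) by (apply skew_bound; auto).
  assert (HK' : forall i j, Rabs (skew v' i j) <= / 2) by (apply skew_bound; auto).
  assert (HKd : forall i j, Rabs (skew v i j - skew v' i j) <= d).
  { intros. rewrite skew_sub. apply skew_bound. intros; apply Hd. }
  assert (HK2 : forall i j, Rabs (mmul (skew v) (skew v) i j) <= 3 * (/2 * /2)) by (apply mmul_bound; auto).
  assert (HK2d : forall i j, Rabs (mmul (skew v) (skew v) i j - mmul (skew v') (skew v') i j) <= 3 * (d * /2 + /2 * d))
    by (apply mmul_diff; auto).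
  assert (EE : Rod v i j - Rod v' i j = (alpha x * skew v i j - alpha x' * skew v' i j) + (beta x * mmul (skew v) (skew v) i j - beta x' * mmul (skew v') (skew v') i j)).
  { unfold Rod, madd, mscale. fold x x'. ring. }
  rewrite EE.
  eapply Rle_trans. apply Rabs_triang.
  pose proof (abs_prod_diff (alpha x) (skew v i j) (alpha x') (skew v' i j)).
  pose proof (abs_prod_diff (beta x) (mmul (skew v) (skew v) i j) (beta x') (mmul (skew v') (skew v') i j)).
  specialize (HK i j); specialize (HKd i j); specialize (HK2 i j); specialize (HK2d i j).
  pose proof (Rabs_pos (alpha x - alpha x')); pose proof (Rabs_pos (beta x - beta x')).
  pose proof (Rabs_pos (skew v i j)); pose proof (Rabs_pos (mmul (skew v) (skew v) i j)).
  pose proof (Rabs_pos (alpha x')); pose proof (Rabs_pos (beta x')).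
  pose proof (Rabs_pos (skew v i j - skew v' i j)).
  pose proof (Rabs_pos (mmul (skew v) (skew v) i j - mmul (skew v') (skew v') i j)).
  assert (Rabs (alpha x - alpha x') * Rabs (skew v i j) <= 3 * d * / 2) by (apply Rmult_le_compat; lra).
  assert (Rabs (alpha x') * Rabs (skew v i j - skew v' i j) <= 2 * d) by (apply Rmult_le_compat; lra).
  assert (Rabs (beta x - beta x') * Rabs (mmul (skew v) (skew v) i j) <= 3 * d * (3 * (/2 * /2))) by (apply Rmult_le_compat; lra).
  assert (Rabs (beta x') * Rabs (mmul (skew v) (skew v) i j - mmul (skew v') (skew v') i j) <= 2 * (3 * (d * /2 + /2 * d))) by (apply Rmult_le_compat; lra).
  lra.
Qed.


Definition qa (h : R) (O w : Vec) : Vec := vscale (- (h / 2)) (vsub O w).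
Definition esum (u v : Vec) := Rabs (u I0 - v I0) + Rabs (u I1 - v I1) + Rabs (u I2 - v I2).

Lemma abs_le_sq x B : Rabs x <= B -> x * x <= B * B.
Proof. intros H. unfold Rabs in H. destruct Rcase_abs in H; nra. Qed.

Lemma rodV_bound x V B : 0 <= B -> (forall k, Rabs (V k) <= B) -> forall k, Rabs (mvmul (Rod x) V k) <= 2 * B.
Proof.
  intros HB HV k. pose proof (rod_orth x V) as HO.
  set (y := mvmul (Rod x) V) in *.
  assert (Hy : y k * y k <= vdot y y).
  { unfold vdot, sum3. destruct k; nra. }
  assert (HVV : vdot V V <= 3 * (B * B)).
  { unfold vdot, sum3. pose proof (abs_le_sq _ _ (HV I0)); pose proof (abs_le_sq _ _ (HV I1)); pose proof (abs_le_sq _ _ (HV I2)). lra. }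
  assert (y k * y k <= (2 * B) * (2 * B)) by nra.
  rewrite <- (Rabs_right (2 * B)) by lra. apply Rsqr_le_abs_0. unfold Rsqr. lra.
Qed.

Lemma esum_ge u v k : Rabs (u k - v k) <= esum u v.
Proof. unfold esum. pose proof (Rabs_pos (u I0 - v I0)); pose proof (Rabs_pos (u I1 - v I1)); pose proof (Rabs_pos (u I2 - v I2)).
  destruct k; lra. Qed.

Lemma qa_small h O w B Bw : 0 < h -> (forall k, Rabs (O k) <= B) -> (forall k, Rabs (w k) <= Bw) ->
  h * (B + Bw) <= 1 -> forall k, Rabs (qa h O w k) <= / 2.
Proof. intros Hh HO Hw Hs k. unfold qa, vscale, vsub. rewrite Rabs_mult, Rabs_Ropp, (Rabs_right (h/2)) by lra.
  assert (Rabs (O k - w k) <= B + Bw). { eapply Rle_trans. apply Rabs_triang. rewrite Rabs_Ropp. pose proof (HO k); pose proof (Hw k). lra. }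
  pose proof (Rabs_pos (O k - w k)). nra. Qed.

Lemma qa_diff h O w w' k : 0 < h -> Rabs (qa h O w k - qa h O w' k) <= h / 2 * esum w w'.
Proof. intros Hh. unfold qa, vscale, vsub.
  replace (- (h / 2) * (O k - w k) - - (h / 2) * (O k - w' k)) with (h / 2 * (w k - w' k)) by ring.
  rewrite Rabs_mult, (Rabs_right (h/2)) by lra. apply Rmult_le_compat_l. lra. apply esum_ge. Qed.

Lemma rodV_lip x x' V B d : 0 <= B -> (forall k, Rabs (V k) <= B) ->
  (forall k, Rabs (x k) <= / 2) -> (forall k, Rabs (x' k) <= / 2) -> (forall k, Rabs (x k - x' k) <= d) ->
  forall k, Rabs (mvmul (Rod x) V k - mvmul (Rod x') V k) <= 36 * d * B.
Proof.
  intros HB HV Hx Hx' Hd k. pose proof (rod_lip x x' d Hx Hx' Hd) as HL.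
  assert (Hd0 : 0 <= d) by (pose proof (Hd I0); pose proof (Rabs_pos (x I0 - x' I0)); lra).
  assert (T : forall j, Rabs (Rod x k j * V j - Rod x' k j * V j) <= 12 * d * B).
  { intros j. replace (Rod x k j * V j - Rod x' k j * V j) with ((Rod x k j - Rod x' k j) * V j) by ring.
    rewrite Rabs_mult. apply Rmult_le_compat; auto; apply Rabs_pos. }
  unfold mvmul, sum3.
  replace (Rod x k I0 * V I0 + Rod x k I1 * V I1 + Rod x k I2 * V I2 - (Rod x' k I0 * V I0 + Rod x' k I1 * V I1 + Rod x' k I2 * V I2))
    with ((Rod x k I0 * V I0 - Rod x' k I0 * V I0) + (Rod x k I1 * V I1 - Rod x' k I1 * V I1) + (Rod x k I2 * V I2 - Rod x' k I2 * V I2)) by ring.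
  eapply Rle_trans. apply Rabs_triang. pose proof (Rabs_triang (Rod x k I0 * V I0 - Rod x' k I0 * V I0) (Rod x k I1 * V I1 - Rod x' k I1 * V I1)).
  pose proof (T I0); pose proof (T I1); pose proof (T I2). lra.
Qed.

Lemma rodV_qa_lip h O V w w' B Bw : 0 < h -> 0 <= B -> (forall k, Rabs (V k) <= B) -> (forall k, Rabs (O k) <= B) ->
  (forall k, Rabs (w k) <= Bw) -> (forall k, Rabs (w' k) <= Bw) -> h * (B + Bw) <= 1 ->
  forall k, Rabs (mvmul (Rod (qa h O w)) V k - mvmul (Rod (qa h O w')) V k) <= 18 * h * B * esum w w'.
Proof.
  intros Hh HB HV HO Hw Hw' Hs k. eapply Rle_trans. apply (rodV_lip _ _ V B (h / 2 * esum w w') HB HV).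
  apply (qa_small h O w B Bw); auto. apply (qa_small h O w' B Bw); auto. intros; apply qa_diff; auto.
  apply Req_le. field.
Qed.

Lemma stab m h O V ws w1 B rho : 0 < m -> 0 < h -> 0 <= B ->
  (forall k, Rabs (V k) <= B) -> (forall k, Rabs (O k) <= B) -> (forall k, Rabs (ws k) <= 2 * B / m) ->
  h * (B + 2 * B / m) <= 1 -> 108 * h * B <= m ->
  (forall k, m * w1 k = mvmul (Rod (qa h O w1)) V k) ->
  (forall k, Rabs (m * ws k - mvmul (Rod (qa h O ws)) V k) <= rho) ->
  esum w1 ws <= 6 * rho / m.
Proof.
  intros Hm Hh HB HV HO Hws Hs Hs2 Hw1 Hr.
  assert (Hb1 : forall k, Rabs (w1 k) <= 2 * B / m).
  { intros k. pose proof (rodV_bound (qa h O w1) V B HB HV k) as X. rewrite <- Hw1 in X.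
    rewrite Rabs_mult, (Rabs_right m) in X by lra. apply (Rmult_le_reg_l m). lra.
    replace (m * (2 * B / m)) with (2 * B) by (field; lra). lra. }
  pose proof (rodV_qa_lip h O V w1 ws B (2 * B / m) Hh HB HV HO Hb1 Hws Hs) as HL.
  assert (Hk : forall k, m * Rabs (w1 k - ws k) <= 18 * h * B * esum w1 ws + rho).
  { intros k. rewrite <- (Rabs_right m) by lra. rewrite <- Rabs_mult.
    replace (m * (w1 k - ws k)) with ((mvmul (Rod (qa h O w1)) V k - mvmul (Rod (qa h O ws)) V k) - (m * ws k - mvmul (Rod (qa h O ws)) V k))
      by (rewrite <- Hw1; ring).
    eapply Rle_trans. apply Rabs_triang. rewrite Rabs_Ropp. pose proof (HL k); pose proof (Hr k). lra. }
  assert (HE : m * esum w1 ws <= 3 * (18 * h * B * esum w1 ws + rho)).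
  { unfold esum at 1. pose proof (Hk I0); pose proof (Hk I1); pose proof (Hk I2). lra. }
  assert (He0 : 0 <= esum w1 ws) by (unfold esum; pose proof (Rabs_pos (w1 I0 - ws I0)); pose proof (Rabs_pos (w1 I1 - ws I1)); pose proof (Rabs_pos (w1 I2 - ws I2)); lra).
  assert (m / 2 * esum w1 ws <= 3 * rho) by nra.
  apply (Rmult_le_reg_l (m / 2)). lra. replace (m / 2 * (6 * rho / m)) with (3 * rho) by (field; lra). lra.
Qed.

Section Contr.
Variables (m h B : R) (Oo V : Vec).
Hypotheses (Hm : 0 < m) (Hh : 0 < h) (HB : 0 <= B) (HV : forall k, Rabs (V k) <= B)
  (HO : forall k, Rabs (Oo k) <= B) (Hs : h * (B + 2 * B / m) <= 1) (Hs2 : 108 * h * B <= m).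

Definition Tm (w : Vec) : Vec := fun k => / m * mvmul (Rod (qa h Oo w)) V k.

Lemma T_bound w k : Rabs (Tm w k) <= 2 * B / m.
Proof. unfold Tm. rewrite Rabs_mult, Rabs_right by (apply Rle_ge, Rlt_le, Rinv_0_lt_compat; lra).
  pose proof (rodV_bound (qa h Oo w) V B HB HV k). unfold Rdiv.
  rewrite (Rmult_comm (2 * B)). apply Rmult_le_compat_l. apply Rlt_le, Rinv_0_lt_compat; lra. auto. Qed.

Lemma T_contr w w' : (forall k, Rabs (w k) <= 2 * B / m) -> (forall k, Rabs (w' k) <= 2 * B / m) ->
  esum (Tm w) (Tm w') <= / 2 * esum w w'.
Proof.
  intros Hw Hw'. pose proof (rodV_qa_lip h Oo V w w' B (2 * B / m) Hh HB HV HO Hw Hw' Hs) as HL.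
  assert (Hk : forall k, Rabs (Tm w k - Tm w' k) <= / m * (18 * h * B * esum w w')).
  { intros k. unfold Tm. rewrite <- Rmult_minus_distr_l, Rabs_mult, Rabs_right by (apply Rle_ge, Rlt_le, Rinv_0_lt_compat; lra).
    apply Rmult_le_compat_l. apply Rlt_le, Rinv_0_lt_compat; lra. auto. }
  assert (He0 : 0 <= esum w w') by (unfold esum; pose proof (Rabs_pos (w I0 - w' I0)); pose proof (Rabs_pos (w I1 - w' I1)); pose proof (Rabs_pos (w I2 - w' I2)); lra).
  assert (X : 3 * (/ m * (18 * h * B * esum w w')) <= / 2 * esum w w').
  { replace (3 * (/ m * (18 * h * B * esum w w'))) with ((54 * h * B) / m * esum w w') by (field; lra).
    apply Rmult_le_compat_r. auto. apply (Rmult_le_reg_l m). lra.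
    replace (m * (54 * h * B / m)) with (54 * h * B) by (field; lra). lra. }
  unfold esum at 1. pose proof (Hk I0); pose proof (Hk I1); pose proof (Hk I2). lra.
Qed.

Fixpoint it (n : nat) : Vec := match n with O => fun _ => 0 | S n => Tm (it n) end.

Lemma it_bound n k : Rabs (it n k) <= 2 * B / m.
Proof. destruct n. simpl. rewrite Rabs_R0. apply Rmult_le_pos. lra. apply Rlt_le, Rinv_0_lt_compat; lra.
  simpl. apply T_bound. Qed.

Definition Eone := esum (it 1) (it 0).

Lemma E1_nonneg : 0 <= Eone.
Proof. unfold Eone, esum. pose proof (Rabs_pos (it 1 I0 - it 0 I0)); pose proof (Rabs_pos (it 1 I1 - it 0 I1)); pose proof (Rabs_pos (it 1 I2 - it 0 I2)); lra. Qed.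

Lemma it_step n : esum (it (S n)) (it n) <= (/ 2) ^ n * Eone.
Proof. induction n as [|n IH]. simpl pow. unfold Eone. lra.
  apply Rle_trans with (/ 2 * esum (it (S n)) (it n)). apply T_contr; intros; apply it_bound.
  simpl pow. pose proof E1_nonneg. nra. Qed.

Lemma it_far q j k : Rabs (it (q + j) k - it q k) <= 2 * (/ 2) ^ q * (1 - (/ 2) ^ j) * Eone.
Proof.
  induction j as [|j IH].
  - replace (q + 0)%nat with q by lia. rewrite Rminus_diag, Rabs_R0. simpl. lra.
  - replace (q + S j)%nat with (S (q + j)) by lia.
    replace (it (S (q + j)) k - it q k) with ((it (S (q + j)) k - it (q + j) k) + (it (q + j) k - it q k)) by ring.
    eapply Rle_trans. apply Rabs_triang. pose proof (esum_ge (it (S (q + j))) (it (q + j)) k).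
    pose proof (it_step (q + j)). rewrite pow_add in H0. simpl pow.
    assert (0 <= (/2) ^ q) by (apply pow_le; lra). assert (0 <= (/2) ^ j) by (apply pow_le; lra).
    pose proof E1_nonneg. nra.
Qed.

Lemma it_far' q j k : Rabs (it (q + j) k - it q k) <= 2 * (/ 2) ^ q * Eone.
Proof. eapply Rle_trans. apply it_far. assert (0 <= (/2) ^ q) by (apply pow_le; lra).
  assert (0 <= (/2) ^ j) by (apply pow_le; lra). pose proof E1_nonneg.
  assert (0 <= (/2)^q * (/2)^j * Eone) by (apply Rmult_le_pos; [apply Rmult_le_pos|]; lra).
  assert (EE : 2 * (/2)^q * (1 - (/2)^j) * Eone = 2 * (/2)^q * Eone - 2 * ((/2)^q * (/2)^j * Eone)) by ring.
  rewrite EE. lra. Qed.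

Lemma it_cauchy k : Cauchy_crit (fun n => it n k).
Proof.
  intros eps He. destruct (pow_lt_1_zero (/ 2) ltac:(rewrite Rabs_right; lra) (eps / (4 * Eone + 1))) as [N HN].
  { pose proof E1_nonneg. apply Rdiv_lt_0_compat; lra. }
  exists N. intros n p Hn Hp. specialize (HN N ltac:(lia)). rewrite Rabs_right in HN by (apply Rle_ge, pow_le; lra).
  unfold Rdist. replace n with (N + (n - N))%nat by lia. replace p with (N + (p - N))%nat by lia.
  replace (it (N + (n - N)) k - it (N + (p - N)) k) with ((it (N + (n - N)) k - it N k) - (it (N + (p - N)) k - it N k)) by ring.
  eapply Rle_lt_trans. apply Rabs_triang. rewrite Rabs_Ropp.
  pose proof (it_far' N (n - N) k). pose proof (it_far' N (p - N) k). pose proof E1_nonneg.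
  assert (0 <= (/2) ^ N) by (apply pow_le; lra).
  assert (4 * Eone * (/ 2) ^ N < eps).
  { apply (Rmult_lt_compat_l (4 * Eone + 1)) in HN; [|lra]. replace ((4 * Eone + 1) * (eps / (4 * Eone + 1))) with eps in HN by (field; lra). nra. }
  lra.
Qed.

Definition lim_it : Vec := fun k => proj1_sig (R_complete _ (it_cauchy k)).
Lemma lim_cv k : Un_cv (fun n => it n k) (lim_it k).
Proof. unfold lim_it. destruct (R_complete _ (it_cauchy k)). simpl. auto. Qed.

Lemma lim_bound k : Rabs (lim_it k) <= 2 * B / m.
Proof. apply (Rle_cv_lim (Un := fun n => Rabs (it n k)) (Vn := fun _ => 2 * B / m)).
  intros; apply it_bound. apply cv_cvabs, lim_cv. apply Un_cv_const. Qed.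

Lemma fixpoint_exists : exists w, forall k, m * w k = mvmul (Rod (qa h Oo w)) V k.
Proof.
  exists lim_it. intros k.
  assert (Hc : Un_cv (fun n => Tm (it n) k) (Tm lim_it k)).
  { intros eps He.
    destruct (lim_cv I0 (eps / 2) ltac:(lra)) as [N0 H0]. destruct (lim_cv I1 (eps / 2) ltac:(lra)) as [N1 H1].
    destruct (lim_cv I2 (eps / 2) ltac:(lra)) as [N2 H2]. exists (N0 + N1 + N2)%nat. intros n Hn.
    specialize (H0 n ltac:(lia)). specialize (H1 n ltac:(lia)). specialize (H2 n ltac:(lia)).
    unfold Rdist in *. eapply Rle_lt_trans. eapply Rle_trans; [apply esum_ge|]. apply T_contr.
    intros; apply it_bound. apply lim_bound. unfold esum. lra. }
  assert (Hc2 : Un_cv (fun n => Tm (it n) k) (lim_it k)).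
  { apply (Un_cv_ext (fun n => it (n + 1) k)). intros n. replace (n + 1)%nat with (S n) by lia. reflexivity.
    apply (CV_shift' (fun n => it n k) 1). apply lim_cv. }
  pose proof (UL_sequence _ _ _ Hc Hc2) as EE. rewrite <- EE. unfold Tm. field. lra.
Qed.
End Contr.


Ltac jsolve2 := eapply Jn_coef; [jrec| | | ]; try reflexivity; try (unf; simpl; ring); try (unf; simpl; field; lra).

Lemma cont_Ob0 (f : R -> R) t0 l : derivable_pt_lim f t0 l -> Ob 0 (fun h => f (t0 + h)).
Proof.
  intros H. assert (Hc : continuity_pt f t0). { apply derivable_continuous_pt. exists l. exact H. }
  destruct (Hc 1 ltac:(lra)) as [d [Hd Hd2]]. exists (Rabs (f t0) + 1), d. split; [lra|].
  intros h Hh. simpl. rewrite Rmult_1_r. assert (Hx : dist R_met (f (t0 + h)) (f t0) < 1).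
  { apply Hd2. split. split. constructor. lra. simpl. unfold Rdist. replace (t0 + h - t0) with h by ring. rewrite Rabs_right; lra. }
  simpl in Hx. unfold Rdist in Hx. pose proof (Rabs_triang_inv (f (t0 + h)) (f t0)). lra.
Qed.

Section Main.
Variables (m : R) (D W : Mat) (Phi dPhi : R -> R) (Om : R -> Vec) (E U : R -> Mat)
  (Rc : R -> Mat) (wc : R -> Vec) (a b t0 : R).
Hypothesis (Hm : 0 < m) (HPhi_sm : smooth Phi) (HdPhi : forall x, derivable_pt_lim Phi x (dPhi x))
  (HOm : forall k, smooth (fun t => Om t k))
  (HE : forall i j, smooth (fun t => E t i j))
  (HU : forall i j, smooth (fun t => U t i j))
  (Hab : a < t0 < b)
  (HRode : forall t, a < t < b -> forall i j,
     derivable_pt_lim (fun s => Rc s i j) t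
       (mmul (Rc t) (skew (vsub (Om t) (wc t))) i j))
  (Hwode : forall t, a < t < b -> forall k,
     derivable_pt_lim (fun s => wc s k) t
       ((vadd (vsub (vscale (- m) (cross (vsub (Om t) (wc t)) (wc t)))
                    (mvmul D (wc t)))
              (vscale (dPhi (U0 (E t) W (Rc t) (U t)))
                      (SL (Lmat (E t) W (U t)) (Rc t))) k) / m)).

Definition FPhi : nat -> R -> R := proj1_sig (constructive_indefinite_description _ HPhi_sm).
Lemma FPhi_spec : FPhi 0%nat = Phi /\ forall n x, derivable_pt_lim (FPhi n) x (FPhi (S n) x).
Proof. unfold FPhi. destruct (constructive_indefinite_description _ HPhi_sm) as [F HF]. exact HF. Qed.
Lemma dPhi_eq x : dPhi x = FPhi 1%nat x.
Proof. destruct FPhi_spec as [H0 H1]. apply (uniqueness_limite Phi x). auto. rewrite <- H0. apply H1. Qed.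
Lemma dPhi_d x : derivable_pt_lim dPhi x (FPhi 2%nat x).
Proof. replace dPhi with (FPhi 1%nat). apply FPhi_spec. apply functional_extensionality. intros; rewrite dPhi_eq; auto. Qed.
Lemma FPhi_d n x : derivable_pt_lim (FPhi n) x (FPhi (S n) x).
Proof. apply FPhi_spec. Qed.
Lemma FPhi_c n x : continuity_pt (FPhi n) x.
Proof. apply (deriv_cont (FPhi n) (FPhi (S n))). apply FPhi_d. Qed.

Definition FOm k : nat -> R -> R := proj1_sig (constructive_indefinite_description _ (HOm k)).
Definition FE i j : nat -> R -> R := proj1_sig (constructive_indefinite_description _ (HE i j)).
Definition FU i j : nat -> R -> R := proj1_sig (constructive_indefinite_description _ (HU i j)).

Definition Omh (h : R) : Vec := Om (t0 + h).
Definition Eh (h : R) : Mat := E (t0 + h).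
Definition Uh (h : R) : Mat := U (t0 + h).
Definition Rh (h : R) : Mat := Rc (t0 + h).
Definition wh (h : R) : Vec := wc (t0 + h).
Definition Om1 : Vec := fun k => FOm k 1%nat t0.
Definition E1 : Mat := fun i j => FE i j 1%nat t0.
Definition U1 : Mat := fun i j => FU i j 1%nat t0.

Lemma Om_J : JV 2 Omh (Om t0) Om1 (fun _ => 0).
Proof. intros k. unfold Omh, Om1, FOm. destruct (constructive_indefinite_description _ (HOm k)) as [F [HF0 HF]].
  simpl. exact (smooth_J2 (fun t => Om t k) F t0 HF0 HF). Qed.
Lemma E_J : JM 2 Eh (E t0) E1 (fun _ _ => 0).
Proof. intros i j. unfold Eh, E1, FE. destruct (constructive_indefinite_description _ (HE i j)) as [F [HF0 HF]].
  simpl. exact (smooth_J2 (fun t => E t i j) F t0 HF0 HF). Qed.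
Lemma U_J : JM 2 Uh (U t0) U1 (fun _ _ => 0).
Proof. intros i j. unfold Uh, U1, FU. destruct (constructive_indefinite_description _ (HU i j)) as [F [HF0 HF]].
  simpl. exact (smooth_J2 (fun t => U t i j) F t0 HF0 HF). Qed.

Definition d0 : R := (b - t0) / 2.
Lemma d0_pos : 0 < d0. Proof. unfold d0. lra. Qed.
Lemma in_win t : t0 <= t <= t0 + d0 -> a < t < b. Proof. unfold d0. lra. Qed.

Definition phiF (R0 : Mat) (Ei Ui : Mat) : R := dPhi (U0 Ei W R0 Ui).
Definition FF (Ei Ui R0 : Mat) : Vec := vscale (phiF R0 Ei Ui) (SL (Lmat Ei W Ui) R0).
Definition gRf (R0 : Mat) (O w : Vec) : Mat := mmul R0 (skew (vsub O w)).
Definition gwf (O w F : Vec) : Vec := fun k =>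
  (vadd (vsub (vscale (- m) (cross (vsub O w) w)) (mvmul D w)) F k) / m.

Definition FFh h := FF (Eh h) (Uh h) (Rh h).
Definition gRh h := gRf (Rh h) (Omh h) (wh h).
Definition gwh h := gwf (Omh h) (wh h) (FFh h).

Lemma gR_deriv h i j : 0 <= h <= d0 -> derivable_pt_lim (fun s => Rc s i j) (t0 + h) (gRh (t0 + h - t0) i j).
Proof. intros Hh. replace (t0 + h - t0) with h by ring. apply HRode. apply in_win. lra. Qed.
Definition R0 := Rc t0.
Definition w0 := wc t0.
Definition F0 := FF (E t0) (U t0) R0.

Definition L0 := Lmat (E t0) W (U t0).
Definition Lb := madd (Lmat E1 W (U t0)) (Lmat (E t0) W U1).
Definition M0 := msub (E t0) (mmul R0 (U t0)).
Definition Mb (Rb : Mat) := msub E1 (madd (mmul Rb (U t0)) (mmul R0 U1)).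
Definition y0 := U0 (E t0) W R0 (U t0).
Definition y1 (Rb : Mat) := / 2 * (frob (Mb Rb) (mmul M0 W) + frob M0 (mmul (Mb Rb) W)).
Definition S0 := SL L0 R0.
Definition S1 (Rb : Mat) := vadd (SL Lb R0) (SL L0 Rb).
Definition Fcoef (Rb : Mat) := vadd (vscale (FPhi 2 y0 * y1 Rb) S0) (vscale (dPhi y0) (S1 Rb)).

Lemma U0_gen n (Rx : R -> Mat) Rb : (n <= 2)%nat -> JM n Rx R0 Rb (fun _ _ => 0) ->
  Jn n (fun h => U0 (Eh h) W (Rx h) (Uh h)) y0 (y1 Rb) 0.
Proof.
  intros Hn HR. pose proof E_J as HE'. pose proof U_J as HU'. eapply Jn_dropc; auto.
  unfold y0, y1, Mb, M0. unf; simpl; jsolve2.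
Qed.

Lemma S_gen n (Rx : R -> Mat) Rb : (n <= 2)%nat -> JM n Rx R0 Rb (fun _ _ => 0) ->
  forall k, Jn n (fun h => SL (Lmat (Eh h) W (Uh h)) (Rx h) k) (S0 k) (S1 Rb k) 0.
Proof.
  intros Hn HR. pose proof E_J as HE'. pose proof U_J as HU'. intros k.
  unfold S0, S1, L0, Lb. destruct k; eapply Jn_dropc; auto; unf; simpl; jsolve2.
Qed.

Lemma FF_gen n (Rx : R -> Mat) Rb : (n <= 2)%nat -> JM n Rx R0 Rb (fun _ _ => 0) ->
  JV n (fun h => FF (Eh h) (Uh h) (Rx h)) F0 (Fcoef Rb) (fun _ => 0).
Proof.
  intros Hn HR. pose proof (U0_gen n Rx Rb Hn HR) as Hy.
  pose proof (Jn_comp dPhi (FPhi 2%nat) (FPhi 3%nat) n _ _ _ _ dPhi_d (FPhi_d 2%nat) (FPhi_c 3%nat) Hn Hy) as Hp.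
  intros k. pose proof (S_gen n Rx Rb Hn HR k) as Hs. eapply Jn_dropc; auto.
  eapply Jn_coef. apply (Jn_mul n _ _ _ _ _ _ _ _ ltac:(lia) Hp Hs).
  - unfold F0, FF, phiF, vscale, S0, y0, L0. reflexivity.
  - unfold Fcoef, vadd, vscale. ring.
  - reflexivity.
Qed.

Definition K0 := skew (vsub (Om t0) w0).
Definition gR0 := gRf R0 (Om t0) w0.
Definition gRb (Rb : Mat) (wb : Vec) := madd (mmul Rb K0) (mmul R0 (skew (vsub Om1 wb))).
Definition g0 := gwf (Om t0) w0 F0.
Definition gwb (wb Fb : Vec) : Vec := fun k =>
  (vadd (vsub (vscale (- m) (vadd (cross (vsub Om1 wb) w0) (cross (vsub (Om t0) w0) wb))) (mvmul D wb)) Fb k) / m.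

Lemma step_lvl n Rb wb : (n <= 2)%nat -> JM n Rh R0 Rb (fun _ _ => 0) -> JV n wh w0 wb (fun _ => 0) ->
  JV n FFh F0 (Fcoef Rb) (fun _ => 0) /\ JM n gRh gR0 (gRb Rb wb) (fun _ _ => 0) /\
    JV n gwh g0 (gwb wb (Fcoef Rb)) (fun _ => 0).
Proof.
  intros Hn HR Hw. pose proof (FF_gen n Rh Rb Hn HR) as HF. fold FFh in HF. split; [auto|split].
  - intros i j. pose proof Om_J as HO.
    unfold gRh, gRf, gR0, gRf, gRb, K0. destruct i, j; eapply Jn_dropc; auto; unf; simpl; jsolve2.
  - intros k. pose proof Om_J as HO.
    unfold gwh, gwf, g0, gwb. destruct k; eapply Jn_dropc; auto; unf; simpl; jsolve2.
Qed.

Lemma integ_R n G0 Gb : (n <= 2)%nat -> JM n gRh G0 Gb (fun _ _ => 0) ->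
  JM (S n) Rh R0 G0 (fun i j => Gb i j / 2).
Proof.
  intros Hn HG i j. apply (integ n (fun s => Rc s i j) (fun t => gRh (t - t0) i j) t0 d0 (G0 i j) (Gb i j) 0 Hn d0_pos).
  - intros t Ht. pose proof (gR_deriv (t - t0) i j ltac:(lra)) as G. replace (t0 + (t - t0)) with t in G by ring. exact G.
  - eapply Jn_ext; [|apply HG]. intros h _. simpl. replace (t0 + h - t0) with h by ring. reflexivity.
Qed.

Lemma gw_deriv h k : 0 <= h <= d0 -> derivable_pt_lim (fun s => wc s k) (t0 + h) (gwh (t0 + h - t0) k).
Proof. intros Hh. replace (t0 + h - t0) with h by ring. apply Hwode. apply in_win. lra. Qed.

Lemma integ_w n G0 Gb : (n <= 2)%nat -> JV n gwh G0 Gb (fun _ => 0) ->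
  JV (S n) wh w0 G0 (fun k => Gb k / 2).
Proof.
  intros Hn HG k. apply (integ n (fun s => wc s k) (fun t => gwh (t - t0) k) t0 d0 (G0 k) (Gb k) 0 Hn d0_pos).
  - intros t Ht. pose proof (gw_deriv (t - t0) k ltac:(lra)) as G. replace (t0 + (t - t0)) with t in G by ring. exact G.
  - eapply Jn_ext; [|apply HG]. intros h _. simpl. replace (t0 + h - t0) with h by ring. reflexivity.
Qed.

Lemma JM_dropc n A x y z : (n <= 2)%nat -> JM n A x y z -> JM n A x y (fun _ _ => 0).
Proof. intros Hn H i j. eapply Jn_dropc; eauto. Qed.
Lemma JV_dropc n A x y z : (n <= 2)%nat -> JV n A x y z -> JV n A x y (fun _ => 0).
Proof. intros Hn H i. eapply Jn_dropc; eauto. Qed.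

Lemma exact_J : JV 2 FFh F0 (Fcoef gR0) (fun _ => 0) /\
  JM 3 Rh R0 gR0 (fun i j => gRb gR0 g0 i j / 2) /\ JV 3 wh w0 g0 (fun k => gwb g0 (Fcoef gR0) k / 2).
Proof.
  assert (HR0 : JM 0 Rh R0 (fun _ _ => 0) (fun _ _ => 0)).
  { intros i j. apply Jn0_of_Ob0. apply (cont_Ob0 (fun s => Rc s i j) t0 _ (HRode t0 Hab i j)). }
  assert (Hw0 : JV 0 wh w0 (fun _ => 0) (fun _ => 0)).
  { intros k. apply Jn0_of_Ob0. apply (cont_Ob0 (fun s => wc s k) t0 _ (Hwode t0 Hab k)). }
  destruct (step_lvl 0 _ _ ltac:(lia) HR0 Hw0) as [_ [HgR0 Hgw0]].
  pose proof (JM_dropc 1 _ _ _ _ ltac:(lia) (integ_R 0 _ _ ltac:(lia) HgR0)) as HR1.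
  pose proof (JV_dropc 1 _ _ _ _ ltac:(lia) (integ_w 0 _ _ ltac:(lia) Hgw0)) as Hw1.
  destruct (step_lvl 1 _ _ ltac:(lia) HR1 Hw1) as [_ [HgR1 Hgw1]].
  pose proof (JM_dropc 2 _ _ _ _ ltac:(lia) (integ_R 1 _ _ ltac:(lia) HgR1)) as HR2.
  pose proof (JV_dropc 2 _ _ _ _ ltac:(lia) (integ_w 1 _ _ ltac:(lia) Hgw1)) as Hw2.
  destruct (step_lvl 2 _ _ ltac:(lia) HR2 Hw2) as [HF [HgR2 Hgw2]].
  split; [auto|split].
  - apply (integ_R 2 _ _ ltac:(lia) HgR2).
  - apply (integ_w 2 _ _ ltac:(lia) Hgw2).
Qed.

Definition A0v : Vec := vsub (Om t0) w0.
Definition Qh0 (h : R) : Mat := Rod (vscale (- (h / 2)) A0v).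
Definition Zh (h : R) : Vec := vadd (mvmul (Qh0 h) (vscale m w0)) (vscale (h / 2) F0).
Definition Mh (h : R) : Mat := madd (mscale m mid) (mscale (h / 2) D).
Definition whf (h : R) : Vec := mvmul (inv3 (Mh h)) (Zh h).
Definition Omhalf (h : R) : Vec := vscale (/ 2) (vadd (Om t0) (Omh h)).
Definition v1h (h : R) : Vec := vscale h (vsub (Omhalf h) (whf h)).
Definition Q1h (h : R) : Mat := Rod (v1h h).
Definition R1f (h : R) : Mat := mmul R0 (Q1h h).

Definition bA : Vec := vscale (- (1/2)) A0v.
Definition Zb : Vec := vadd (mvmul (skew bA) (vscale m w0)) (vscale (/ 2) F0).
Definition Zc : Vec := mvmul (madd (skew (fun _ => 0)) (mscale (/ 2) (mmul (skew bA) (skew bA)))) (vscale m w0).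
Definition wh1 : Vec := fun k => (Zb k - mvmul D w0 k / 2) / m.
Definition wh2 : Vec := fun k => (Zc k - mvmul D wh1 k / 2) / m.

Lemma Qh0_J : JM 3 Qh0 mid (skew bA) (madd (skew (fun _ => 0)) (mscale (/2) (mmul (skew bA) (skew bA)))).
Proof. apply rod_J. lia. intros k. unfold bA. destruct k; unf; simpl; jsolve2. Qed.

Lemma Zh_J : JV 3 Zh (vscale m w0) Zb Zc.
Proof. pose proof Qh0_J as HQ. intros k. unfold Zh, Zb, Zc. destruct k; unf; simpl; jsolve2. Qed.

Lemma det_pos : exists d, 0 < d /\ forall h, 0 < h < d -> det3 (Mh h) >= m ^ 3 / 2.
Proof.
  assert (J : exists x y, Jn 1 (fun h => det3 (Mh h)) (m ^ 3) x y).
  { do 2 eexists. eapply Jn_coef. unfold Mh, det3, cof, sum3, madd, mscale, mid, Rdiv. simpl. jrec.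
    simpl; ring. reflexivity. reflexivity. }
  destruct J as [x [y J]]. unfold Jn in J. assert (J' : Ob 1 (fun h => det3 (Mh h) - m ^ 3)).
  { eapply Ob_ext; [|exact (Ob_add _ _ _ J (Ob1_h_poly x y))]. intros; simpl; ring. }
  destruct (Ob_small 0 _ J' (m ^ 3 / 2)) as [d [Hd H]]. assert (0 < m ^ 3) by (apply pow_lt; lra). lra.
  exists d. split; auto. intros h Hh. specialize (H h Hh). unfold Rabs in H. destruct Rcase_abs in H; lra.
Qed.

Lemma Mh_mul h w i : mvmul (Mh h) w i = m * w i + h / 2 * mvmul D w i.
Proof. unfold Mh, mvmul, madd, mscale, mid, sum3. destruct i; simpl; ring. Qed.

Lemma whf_rel : exists d, 0 < d /\ forall h, 0 < h < d -> forall i,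
  whf h i = / m * Zh h i - h * (/ (2 * m) * mvmul D (whf h) i).
Proof.
  destruct det_pos as [d [Hd H]]. exists d. split; auto. intros h Hh i.
  assert (Hdet : det3 (Mh h) <> 0). { specialize (H h Hh). assert (0 < m ^ 3) by (apply pow_lt; lra). lra. }
  pose proof (inv3_correct (Mh h) (Zh h) Hdet i) as EE. rewrite Mh_mul in EE. fold (whf h) in EE.
  rewrite <- EE. field. lra.
Qed.

Lemma whf_Ob0 : forall i, Ob 0 (fun h => whf h i).
Proof.
  destruct det_pos as [d [Hd H]].
  assert (Hinv : Ob 0 (fun h => / det3 (Mh h))).
  { exists (2 / m ^ 3), d. split; auto. intros h Hh. specialize (H h Hh). assert (0 < m ^ 3) by (apply pow_lt; lra).
    rewrite pow_O, Rmult_1_r. rewrite Rabs_right. 2: { apply Rle_ge, Rlt_le, Rinv_0_lt_compat. lra. }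
    replace (2 / m ^ 3) with (/ (m ^ 3 / 2)) by (field; lra). apply Rinv_le_contravar; lra. }
  assert (Hcof : forall k l, Ob 0 (fun h => cof (Mh h) k l)).
  { intros k l. assert (J : exists x y z, Jn 0 (fun h => cof (Mh h) k l) x y z).
    { unfold Mh, cof, madd, mscale, mid, Rdiv. destruct k, l; simpl; do 3 eexists; jrec. }
    destruct J as [x [y [z J]]]. eapply Jn_Ob0; eauto. }
  assert (HZ : forall k, Ob 0 (fun h => Zh h k)). { intros k. eapply Jn_Ob0. apply Zh_J. }
  intros i. unfold whf, mvmul, inv3, sum3, Rdiv.
  repeat apply Ob_add; apply (Ob_mul 0 0); auto; apply (Ob_mul 0 0); auto.
Qed.

Lemma whf_step k a1 a2 a3 : (k <= 2)%nat -> JV k whf a1 a2 a3 ->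
  JV (S k) whf (fun i => / m * (m * w0 i)) (fun i => / m * Zb i - / (2 * m) * mvmul D a1 i)
     (fun i => / m * Zc i - / (2 * m) * mvmul D a2 i).
Proof.
  intros Hk H i. destruct whf_rel as [d [Hd Hrel]].
  eapply Jn_ext_ev. { exists d. split; auto. intros h Hh. symmetry. apply Hrel; auto. }
  assert (J1 : Jn (S k) (fun h => / m * Zh h i) (/ m * (m * w0 i)) (/ m * Zb i) (/ m * Zc i)).
  { apply Jn_scal. lia. eapply Jn_weak; [|apply Zh_J]. lia. }
  assert (J2 : Jn k (fun h => / (2 * m) * mvmul D (whf h) i) (/ (2 * m) * mvmul D a1 i) (/ (2 * m) * mvmul D a2 i) (/ (2 * m) * mvmul D a3 i)).
  { destruct i; unf; simpl; jsolve2. }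
  pose proof (Jn_hmul _ _ _ _ _ Hk J2) as J3.
  eapply Jn_coef. apply (Jn_sub _ _ _ _ _ _ _ _ _ J1 J3). ring. ring. ring.
Qed.

Lemma whf_J : JV 3 whf w0 wh1 wh2.
Proof.
  assert (H0 : JV 0 whf (fun _ => 0) (fun _ => 0) (fun _ => 0)). { intros i. apply Jn0_of_Ob0. apply whf_Ob0. }
  pose proof (whf_step 0 _ _ _ ltac:(lia) H0) as H1.
  pose proof (whf_step 1 _ _ _ ltac:(lia) H1) as H2.
  pose proof (whf_step 2 _ _ _ ltac:(lia) H2) as H3.
  intros i. eapply Jn_coef. apply H3.
  - field. lra.
  - unfold wh1. unfold mvmul, sum3. field. lra.
  - unfold wh2, wh1. unfold mvmul, sum3. field. lra.
Qed.

Lemma Omhalf_J : JV 2 Omhalf (Om t0) (vscale (/ 2) Om1) (fun _ => 0).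
Proof. pose proof Om_J as HO. intros k. unfold Omhalf. destruct k; unf; simpl; jsolve2. Qed.

Definition vb1 : Vec := vsub (Om t0) w0.
Definition vc1 : Vec := vsub (vscale (/ 2) Om1) wh1.

Lemma v1h_J : JV 3 v1h (fun _ => 0) vb1 vc1.
Proof.
  intros k. pose proof Omhalf_J as HO. pose proof whf_J as HW.
  assert (J : Jn 2 (fun h => Omhalf h k - whf h k) (vb1 k) (vc1 k) (0 - wh2 k)).
  { unfold vb1, vc1. destruct k; unf; simpl; jsolve2. }
  exact (Jn_hmul 2 _ _ _ _ ltac:(lia) J).
Qed.

Lemma R1f_J : JM 3 R1f R0 (mmul R0 (skew vb1)) (mmul R0 (madd (skew vc1) (mscale (/2) (mmul (skew vb1) (skew vb1))))).
Proof.
  pose proof (rod_J 3 v1h vb1 vc1 ltac:(lia) v1h_J) as HQ. fold Q1h in HQ.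
  intros i j. unfold R1f. destruct i, j; unf; simpl; jsolve2.
Qed.

Lemma R_err : forall i j, Ob 3 (fun h => R1f h i j - Rh h i j).
Proof.
  destruct exact_J as [_ [HR _]]. intros i j. apply (Jn_eq 3 _ _ (R0 i j) (gR0 i j) (gRb gR0 g0 i j / 2)).
  - eapply Jn_coef. apply R1f_J.
    + reflexivity.
    + unfold gR0, gRf, vb1, A0v. reflexivity.
    + unfold vc1, vb1, wh1, Zb, bA, A0v, gRb, gR0, gRf, g0, gwf, K0. destruct i, j; unf; simpl; field; lra.
  - apply HR.
Qed.

Definition F1d (h : R) : Vec := FF (Eh h) (Uh h) (R1f h).
Definition hF1d (h : R) : Vec := vscale h (F1d h).
Definition Vh (h : R) : Vec :=
  vadd (mvmul (msub (mscale m mid) (mscale (h / 2) D)) (whf h)) (vscale (/ 2) (hF1d h)).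
Definition qarg (h : R) : Vec := vscale (- (h / 2)) (vsub (Omh h) (wh h)).
Definition Qs (h : R) : Mat := Rod (qarg h).
Definition Fc := Fcoef gR0.
Definition qb : Vec := vscale (- (1/2)) (vsub (Om t0) w0).
Definition qc : Vec := vscale (- (1/2)) (vsub Om1 g0).

Lemma R1f_J2 : JM 2 R1f R0 gR0 (fun _ _ => 0).
Proof. intros i j. eapply Jn_dropc; auto. eapply Jn_coef. eapply Jn_weak; [|apply R1f_J]. lia.
  reflexivity. unfold gR0, gRf, vb1, A0v. reflexivity. reflexivity. Qed.

Lemma hF1d_J : JV 3 hF1d (fun _ => 0) F0 Fc.
Proof. intros k. pose proof (FF_gen 2 R1f gR0 ltac:(lia) R1f_J2 k) as H.
  exact (Jn_hmul 2 _ _ _ _ ltac:(lia) H). Qed.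

Lemma qarg_J : JV 3 qarg (fun _ => 0) qb qc.
Proof.
  destruct exact_J as [_ [_ Hw]]. pose proof Om_J as HO. intros k.
  assert (J : Jn 2 (fun h => - (1/2) * (Omh h k - wh h k)) (qb k) (qc k) (- (1/2) * (0 - gwb g0 Fc k / 2))).
  { unfold qb, qc, Fc. destruct k; unf; simpl; jsolve2. }
  eapply Jn_ext; [|exact (Jn_hmul 2 _ _ _ _ ltac:(lia) J)]. intros h _. cbv beta. unfold qarg, vscale, vsub. field.
Qed.

Lemma Qs_J : JM 3 Qs mid (skew qb) (madd (skew qc) (mscale (/2) (mmul (skew qb) (skew qb)))).
Proof. apply rod_J. lia. apply qarg_J. Qed.

Lemma resid : forall k, Ob 3 (fun h => m * wh h k - mvmul (Qs h) (Vh h) k).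
Proof.
  destruct exact_J as [_ [_ Hw]]. pose proof Qs_J as HQ. pose proof whf_J as HW. pose proof hF1d_J as HF.
  intros k. apply (Jn_eq 3 _ _ (m * w0 k) (m * g0 k) (m * (gwb g0 Fc k / 2))).
  - apply Jn_scal. lia. apply Hw.
  - unfold Vh. destruct k; unf; simpl; (eapply Jn_coef; [jrec| | | ]); unfold qc, qb, wh2, wh1, Zc, Zb, bA, A0v, gwb, g0, gwf; unf; simpl; field; lra.
Qed.

Ltac minle := solve [apply Rle_refl | eapply Rle_trans; [apply Rmin_l|minle] | eapply Rle_trans; [apply Rmin_r|minle]].

Lemma Ob_abs n f : Ob n f -> Ob n (fun h => Rabs (f h)).
Proof. intros [C [d [Hd H]]]. exists C, d. split; auto. intros. rewrite Rabs_Rabsolu. auto. Qed.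

Lemma Ob0_sum3 (f : R -> Vec) : (forall k, Ob 0 (fun h => f h k)) ->
  exists B d, 0 <= B /\ 0 < d /\ forall h, 0 < h < d -> forall k, Rabs (f h k) <= B.
Proof.
  intros H. assert (HS : Ob 0 (fun h => Rabs (f h I0) + Rabs (f h I1) + Rabs (f h I2))).
  { repeat apply Ob_add; apply Ob_abs; auto. }
  destruct HS as [C [d [Hd HC]]]. assert (HC0 := Ob_C_nonneg _ _ _ _ Hd HC). exists C, d. split; auto. split; auto.
  intros h Hh k. specialize (HC h Hh). simpl in HC. rewrite Rmult_1_r in HC.
  rewrite Rabs_right in HC by (apply Rle_ge; pose proof (Rabs_pos (f h I0)); pose proof (Rabs_pos (f h I1)); pose proof (Rabs_pos (f h I2)); lra).
  pose proof (Rabs_pos (f h I0)); pose proof (Rabs_pos (f h I1)); pose proof (Rabs_pos (f h I2)). destruct k; lra.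
Qed.

Lemma Vh_Ob0 : forall k, Ob 0 (fun h => Vh h k).
Proof. intros k. pose proof whf_J as HW. pose proof hF1d_J as HF.
  assert (J : exists x y z, Jn 0 (fun h => Vh h k) x y z).
  { unfold Vh. destruct k; unf; simpl; do 3 eexists; jrec. }
  destruct J as [x [y [z J]]]. eapply Jn_Ob0; eauto. Qed.

Lemma final_bound : exists C d, 0 < C /\ 0 < d /\ forall h, 0 < h < d ->
  (exists w1, forall k, m * w1 k = mvmul (Rod (qa h (Omh h) w1)) (Vh h) k) /\
  (forall w1, (forall k, m * w1 k = mvmul (Rod (qa h (Omh h) w1)) (Vh h) k) ->
     mnorm (msub (R1f h) (Rh h)) + vnorm (vsub w1 (wh h)) <= C * h ^ 3).
Proof.
  assert (HR : Ob 3 (fun h => mnorm (msub (R1f h) (Rh h)))).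
  { unfold mnorm, sum3, msub. repeat apply Ob_add; apply Ob_abs; apply R_err. }
  destruct HR as [C1 [d1 [Hd1 H1]]]. assert (HC1 := Ob_C_nonneg _ _ _ _ Hd1 H1).
  assert (HG : Ob 3 (fun h => Rabs (m * wh h I0 - mvmul (Qs h) (Vh h) I0) + Rabs (m * wh h I1 - mvmul (Qs h) (Vh h) I1)
                              + Rabs (m * wh h I2 - mvmul (Qs h) (Vh h) I2))).
  { repeat apply Ob_add; apply Ob_abs; apply resid. }
  destruct HG as [Cg [d2 [Hd2 H2]]]. assert (HCg := Ob_C_nonneg _ _ _ _ Hd2 H2).
  destruct (Ob0_sum3 Vh Vh_Ob0) as [BV [dV [HBV [HdV HV]]]].
  destruct (Ob0_sum3 Omh (fun k => Jn_Ob0 _ _ _ _ _ (Om_J k))) as [BO [dO [HBO [HdO HO]]]].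
  destruct exact_J as [_ [_ Hw]].
  destruct (Ob0_sum3 wh (fun k => Jn_Ob0 _ _ _ _ _ (Hw k))) as [BW [dW [HBW [HdW HW]]]].
  set (B := BV + BO + m * BW / 2 + 1).
  assert (HB : 1 <= B) by (unfold B; assert (0 <= m * BW / 2) by (apply Rmult_le_pos; [apply Rmult_le_pos|]; lra); lra).
  assert (HBm : 0 < B + 2 * B / m) by (assert (0 < 2 * B / m) by (apply Rdiv_lt_0_compat; lra); lra).
  set (d := Rmin (Rmin (Rmin d1 d2) (Rmin dV dO)) (Rmin dW (Rmin (/ (B + 2 * B / m)) (m / (108 * B))))).
  assert (Hd : 0 < d).
  { unfold d. repeat apply Rmin_pos; auto. apply Rinv_0_lt_compat; auto. apply Rdiv_lt_0_compat; lra. }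
  exists (C1 + 6 * Cg / m + 1), d. split. assert (0 <= 6 * Cg / m) by (apply Rmult_le_pos; [lra|apply Rlt_le, Rinv_0_lt_compat; lra]). lra.
  split; auto. intros h Hh.
  assert (Hmin : h < d1 /\ h < d2 /\ h < dV /\ h < dO /\ h < dW /\ h < / (B + 2 * B / m) /\ h < m / (108 * B)).
  { unfold d in Hh. repeat split; (eapply Rlt_le_trans; [apply Hh|]);
    minle. }
  destruct Hmin as [h1 [h2 [hV [hO [hW [hs1 hs2]]]]]].
  assert (HVB : forall k, Rabs (Vh h k) <= B).
  { intros k. pose proof (HV h ltac:(lra) k). assert (0 <= m * BW / 2) by (apply Rmult_le_pos; [apply Rmult_le_pos|]; lra). unfold B. lra. }
  assert (HOB : forall k, Rabs (Omh h k) <= B).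
  { intros k. pose proof (HO h ltac:(lra) k). assert (0 <= m * BW / 2) by (apply Rmult_le_pos; [apply Rmult_le_pos|]; lra). unfold B. lra. }
  assert (HWB : forall k, Rabs (wh h k) <= 2 * B / m).
  { intros k. pose proof (HW h ltac:(lra) k). apply (Rmult_le_reg_l m). lra.
    replace (m * (2 * B / m)) with (2 * B) by (field; lra). unfold B.
    assert (m * Rabs (wh h k) <= m * BW) by (apply Rmult_le_compat_l; lra). lra. }
  assert (Hs : h * (B + 2 * B / m) <= 1).
  { apply (Rmult_lt_compat_r (B + 2 * B / m)) in hs1; auto. rewrite Rinv_l in hs1 by lra. lra. }
  assert (Hs2 : 108 * h * B <= m).
  { apply (Rmult_lt_compat_r (108 * B)) in hs2; [|lra]. replace (m / (108 * B) * (108 * B)) with m in hs2 by (field; lra). lra. }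
  split.
  - apply (fixpoint_exists m h B (Omh h) (Vh h)); auto; lra.
  - intros w1 Hw1.
    assert (Hres : forall k, Rabs (m * wh h k - mvmul (Rod (qa h (Omh h) (wh h))) (Vh h) k) <= Cg * h ^ 3).
    { intros k. specialize (H2 h ltac:(lra)). rewrite Rabs_right in H2.
      2: { apply Rle_ge. repeat apply Rplus_le_le_0_compat; apply Rabs_pos. }
      change (Rod (qa h (Omh h) (wh h))) with (Qs h).
      pose proof (Rabs_pos (m * wh h I0 - mvmul (Qs h) (Vh h) I0)).
      pose proof (Rabs_pos (m * wh h I1 - mvmul (Qs h) (Vh h) I1)).
      pose proof (Rabs_pos (m * wh h I2 - mvmul (Qs h) (Vh h) I2)). destruct k; lra. }
    pose proof (stab m h (Omh h) (Vh h) (wh h) w1 B (Cg * h ^ 3) Hm ltac:(lra) ltac:(lra) HVB HOB HWB Hs Hs2 Hw1 Hres) as HEs.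
    specialize (H1 h ltac:(lra)). rewrite Rabs_right in H1.
    2: { apply Rle_ge. unfold mnorm, sum3. pose proof Rabs_pos. repeat apply Rplus_le_le_0_compat; apply Rabs_pos. }
    assert (Ev : vnorm (vsub w1 (wh h)) = esum w1 (wh h)) by (unfold vnorm, vsub, esum, sum3; reflexivity).
    rewrite Ev. assert (0 < h ^ 3) by (apply pow_lt; lra).
    replace (6 * (Cg * h ^ 3) / m) with (6 * Cg / m * h ^ 3) in HEs by (field; lra). nra.
Qed.

End Main.

Theorem proposition1
  (m : R) (D W : Mat) (Phi dPhi : R -> R)
  (Om : R -> Vec) (E U : R -> Mat)
  (Rc : R -> Mat) (wc : R -> Vec) (a b t0 : R)
  (* parameters *)
  (Hm : 0 < m)
  (HDs : symmetric D) (HDp : pos_def D)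
  (HWs : symmetric W) (HWp : pos_def W)
  (* Phi : [0,oo) -> [0,oo) smooth, Phi(0)=0, Phi' > 0 on [0,oo) *)
  (HPhi_sm : smooth Phi)
  (HdPhi : forall x, derivable_pt_lim Phi x (dPhi x))
  (HPhi0 : Phi 0 = 0)
  (HPhi_nn : forall x, 0 <= x -> 0 <= Phi x)
  (HdPhi_pos : forall x, 0 <= x -> 0 < dPhi x)
  (* smooth measured signals *)
  (HOm : forall k, smooth (fun t => Om t k))
  (HE : forall i j, smooth (fun t => E t i j))
  (HU : forall i j, smooth (fun t => U t i j))
  (* (Rc, wc) is an exact solution of the continuous-time filter on (a,b), t0 in (a,b) *)
  (Hab : a < t0 < b)
  (HR0 : is_rotation (Rc t0))
  (HRode : forall t, a < t < b -> forall i j,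
     derivable_pt_lim (fun s => Rc s i j) t
       (mmul (Rc t) (skew (vsub (Om t) (wc t))) i j))
  (Hwode : forall t, a < t < b -> forall k,
     derivable_pt_lim (fun s => wc s k) t
       ((vadd (vsub (vscale (- m) (cross (vsub (Om t) (wc t)) (wc t)))
                    (mvmul D (wc t)))
              (vscale (dPhi (U0 (E t) W (Rc t) (U t)))
                      (SL (Lmat (E t) W (U t)) (Rc t))) k) / m)) :
  exists C h0 : R, 0 < C /\ 0 < h0 /\
    forall h : R, 0 < h < h0 ->
      let t1 := t0 + h in
      let R0 := Rc t0 in
      let w0 := wc t0 in
      let Omhat0 := vsub (Om t0) w0 in
      let whalf :=
        mvmul (inv3 (madd (mscale m mid) (mscale (h / 2) D)))
          (vadd (mvmul (mexp (mscale (- (h / 2)) (skew Omhat0))) (vscale m w0))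
                (vscale (h / 2 * dPhi (U0 (E t0) W R0 (U t0)))
                        (SL (Lmat (E t0) W (U t0)) R0))) in
      let Omhalf := vscale (/ 2) (vadd (Om t0) (Om t1)) in
      let R1 := mmul R0 (mexp (skew (vscale h (vsub Omhalf whalf)))) in
      let step_eq (w1 : Vec) : Prop :=
        vscale m w1 =
        mvmul (mexp (mscale (- (h / 2)) (skew (vsub (Om t1) w1))))
          (vadd (mvmul (msub (mscale m mid) (mscale (h / 2) D)) whalf)
                (vscale (h / 2 * dPhi (U0 (E t1) W R1 (U t1)))
                        (SL (Lmat (E t1) W (U t1)) R1))) in
      (exists w1, step_eq w1) /\
      forall w1, step_eq w1 ->
        mnorm (msub R1 (Rc t1)) + vnorm (vsub w1 (wc t1)) <= C * h ^ 3.
Proof.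
  destruct (final_bound m D W Phi dPhi Om E U Rc wc a b t0 Hm HPhi_sm HdPhi HOm HE HU Hab HRode Hwode) as [C [d [HC [Hd Hf]]]].
  exists C, d. split; [auto|split; [auto|]]. intros h Hh. cbv zeta.
  destruct (Hf h Hh) as [Hex Hbd].
  set (WH := mvmul (inv3 (madd (mscale m mid) (mscale (h / 2) D))) _).
  assert (EW : WH = whf m D W dPhi Om E U Rc wc t0 h).
  { unfold WH, whf, Zh, Qh0, Mh, F0, FF, phiF, A0v, w0, R0. rewrite mscale_skew, mexp_skew. f_equal. f_equal.
    apply functional_extensionality; intro k. unfold vscale. ring. }
  rewrite EW. clear WH EW.
  set (R1 := mmul (Rc t0) (mexp _)).
  assert (ER : R1 = R1f m D W dPhi Om E U Rc wc t0 h).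
  { unfold R1, R1f, Q1h, v1h, Omhalf, Omh, R0. rewrite mexp_skew. reflexivity. }
  rewrite ER. clear R1 ER.
  assert (EQ : forall w1, mvmul (mexp (mscale (- (h / 2)) (skew (vsub (Om (t0 + h)) w1))))
       (vadd (mvmul (msub (mscale m mid) (mscale (h / 2) D)) (whf m D W dPhi Om E U Rc wc t0 h))
          (vscale (h / 2 * dPhi (U0 (E (t0 + h)) W (R1f m D W dPhi Om E U Rc wc t0 h) (U (t0 + h))))
             (SL (Lmat (E (t0 + h)) W (U (t0 + h))) (R1f m D W dPhi Om E U Rc wc t0 h))))
     = mvmul (Rod (qa h (Omh Om t0 h) w1)) (Vh m D W dPhi Om E U Rc wc t0 h)).
  { intros w1. rewrite mscale_skew, mexp_skew. unfold qa, Omh. f_equal.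
    unfold Vh, hF1d, F1d, FF, phiF, Eh, Uh. f_equal. apply functional_extensionality; intro k.
    unfold vscale. field. }
  split.
  - destruct Hex as [w1 Hw1]. exists w1. rewrite EQ. apply functional_extensionality; intro k.
    unfold vscale. apply Hw1.
  - intros w1 Hw1. rewrite EQ in Hw1. apply Hbd. intros k.
    change (m * w1 k) with (vscale m w1 k). rewrite Hw1. reflexivity.
Qed.
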